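(* Let $\Phi$ be a root system of type $E_8$. For every $k$ with $0\le k\le 8$, $k\neq4$, any two sets of $k$ pairwise strongly orthogonal roots of $\Phi$ are conjugate under $W(\Phi)$. The sets $\{\alpha_1,\alpha_2,\alpha_3,\alpha_4\}$ of four pairwise strongly orthogonal roots form exactly two $W(\Phi)$-conjugacy classes: those with $K_4(\alpha_1,\alpha_2,\alpha_3,\alpha_4)\subseteq W(\Phi)$, and those with $K_4(\alpha_1,\alpha_2,\alpha_3,\alpha_4)\not\subseteq W(\Phi)$.
   Context: $\Phi$ spans a real Euclidean space $V$ with inner product $(\cdot|\cdot)$; for $0\ne\eta\in V$, $s_\eta(\xi)=\xi-2\frac{(\xi|\eta)}{(\eta|\eta)}\eta$ is the orthogonal reflection in $\eta^\perp$, and $W(\Phi)$ is the Weyl group generated by $s_\alpha$, $\alpha\in\Phi$. Two distinct roots are strongly orthogonal if they are orthogonal and neither their sum nor their difference is a root. For four pairwise orthogonal vectors $v_1,\dots,v_4$ of equal length, $K_4(v_1,v_2,v_3,v_4)$ denotes the Klein four-group of isometries $\{\mathrm{id},\ s_{v_1-v_2}\circ s_{v_3-v_4},\ s_{v_1-v_3}\circ s_{v_2-v_4},\ s_{v_1-v_4}\circ s_{v_2-v_3}\}$. *)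

(* Defs.v *)
From mathcomp Require Import all_boot all_order all_algebra.
Set Implicit Arguments. Unset Strict Implicit. Unset Printing Implicit Defensive.
Import Order.TTheory GRing.Theory Num.Theory.
Local Open Scope ring_scope.

Section E8.
Variable R : realFieldType.

Definition vec := 'rV[R]_8.

Definition dotp (u v : vec) : R := \sum_(i < 8) u 0 i * v 0 i.

Definition refl (eta : vec) (xi : vec) : vec :=
  xi - ((2 * dotp xi eta) / dotp eta eta) *: eta.

Definition ev (i : 'I_8) : vec := delta_mx 0 i.

Definition isE8root (x : vec) : Prop :=
  (exists (i j : 'I_8) (a b : bool), i != j /\
      x = (-1) ^+ a *: ev i + (-1) ^+ b *: ev j)
  \/
  (exists f : {ffun 'I_8 -> bool}, ~~ odd #|[set k | f k]| /\
      x = \row_(k < 8) ((-1) ^+ (f k) / 2)).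

Definition reflword (s : seq vec) (x : vec) : vec := foldr refl x s.

Definition inWeyl (w : vec -> vec) : Prop :=
  exists s : seq vec, (forall a, a \in s -> isE8root a) /\
    (forall x, w x = reflword s x).

Definition strongly_orth (a b : vec) : Prop :=
  a != b /\ dotp a b = 0 /\ ~ isE8root (a + b) /\ ~ isE8root (a - b).

Definition SOset (k : nat) (S : seq vec) : Prop :=
  uniq S /\ size S = k /\ (forall a, a \in S -> isE8root a) /\
  (forall a b, a \in S -> b \in S -> a != b -> strongly_orth a b).

Definition Wconj (S T : seq vec) : Prop :=
  exists w, inWeyl w /\ perm_eq (map w S) T.

(* K_4(v1,v2,v3,v4) contained in W: each nonidentity element lies in W
   (the identity always does). *)
Definition K4_in_W (v1 v2 v3 v4 : vec) : Prop :=
  inWeyl (refl (v1 - v2) \o refl (v3 - v4)) /\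
  inWeyl (refl (v1 - v3) \o refl (v2 - v4)) /\
  inWeyl (refl (v1 - v4) \o refl (v2 - v3)).

Definition K4_in_W_seq (S : seq vec) : Prop :=
  K4_in_W (nth 0 S 0) (nth 0 S 1) (nth 0 S 2) (nth 0 S 3).

End E8.

(* Main.v *)
Require Import Defs.
From mathcomp Require Import all_boot all_order all_algebra.
From mathcomp Require Import ring lra.
Set Implicit Arguments. Unset Strict Implicit. Unset Printing Implicit Defensive.
Import Order.TTheory GRing.Theory Num.Theory.
Local Open Scope ring_scope.
Definition z0 : int := Posz 0.
Definition p2 : int := Posz 2.
Definition p4 : int := Posz 4.
Definition n2 : int := Negz 1.
Definition n4 : int := Negz 3.
Section Alg.
Variable R : realFieldType.
Implicit Types (u v w x y a : vec R).

Lemma dotpC u v : dotp u v = dotp v u.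
Proof. by rewrite /dotp; apply: eq_bigr => i _; rewrite mulrC. Qed.
Lemma dotpDl u v w : dotp (u + v) w = dotp u w + dotp v w.
Proof. by rewrite /dotp -big_split; apply: eq_bigr => i _; rewrite !mxE mulrDl. Qed.
Lemma dotpNl u w : dotp (- u) w = - dotp u w.
Proof. by rewrite /dotp -sumrN; apply: eq_bigr => i _; rewrite !mxE mulNr. Qed.
Lemma dotpBl u v w : dotp (u - v) w = dotp u w - dotp v w.
Proof. by rewrite dotpDl dotpNl. Qed.
Lemma dotpZl (c : R) u w : dotp (c *: u) w = c * dotp u w.
Proof. by rewrite /dotp mulr_sumr; apply: eq_bigr => i _; rewrite !mxE mulrA. Qed.
Lemma dotpDr u v w : dotp w (u + v) = dotp w u + dotp w v.
Proof. by rewrite dotpC dotpDl !(dotpC w). Qed.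
Lemma dotpBr u v w : dotp w (u - v) = dotp w u - dotp w v.
Proof. by rewrite dotpC dotpBl !(dotpC w). Qed.
Lemma dotpNr u w : dotp w (- u) = - dotp w u.
Proof. by rewrite dotpC dotpNl dotpC. Qed.
Lemma dotpZr (c : R) u w : dotp w (c *: u) = c * dotp w u.
Proof. by rewrite dotpC dotpZl dotpC. Qed.

Definition cf a x := 2 * dotp x a / dotp a a.
Lemma reflE a x : refl a x = x - cf a x *: a. Proof. by []. Qed.

Lemma refl_lin a x y (c d : R) : refl a (c *: x + d *: y) = c *: refl a x + d *: refl a y.
Proof.
rewrite !reflE /cf dotpDl !dotpZl !scalerBr !scalerA.
have -> : (2 * (c * dotp x a + d * dotp y a) / dotp a a)
   = c * (2 * dotp x a / dotp a a) + d * (2 * dotp y a / dotp a a) by ring.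
by rewrite scalerDl opprD addrACA.
Qed.
Lemma reflB a x y : refl a (x - y) = refl a x - refl a y.
Proof.
have := refl_lin a x y 1 (-1). by rewrite !scale1r !scaleN1r.
Qed.
Lemma reflD a x y : refl a (x + y) = refl a x + refl a y.
Proof. have := refl_lin a x y 1 1. by rewrite !scale1r. Qed.
Lemma reflZ a x (c : R) : refl a (c *: x) = c *: refl a x.
Proof. have := refl_lin a x 0 c 0. by rewrite !scale0r !addr0. Qed.

Lemma refl_iso a x y : dotp a a != 0 -> dotp (refl a x) (refl a y) = dotp x y.
Proof.
move=> ha; rewrite !reflE /cf !dotpBl !dotpBr !dotpZl !dotpZr.
rewrite ?(dotpC a x) ?(dotpC a y).
move: (dotp x y) (dotp y a) (dotp x a) ha; move: (dotp a a) => D hD A B C.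
by field.
Qed.

Lemma refl_aa a : dotp a a != 0 -> refl a a = - a.
Proof.
move=> ha; rewrite reflE /cf mulfK // -[X in X - _]scale1r -scalerBl.
have -> : (1 - 2 : R) = -1 by rewrite -[2]/(1+1) opprD addrA subrr add0r.
by rewrite scaleN1r.
Qed.

Lemma refl_invol a x : dotp a a != 0 -> refl a (refl a x) = x.
Proof.
move=> ha; rewrite [refl a x]reflE reflB reflZ refl_aa // scalerN opprK.
by rewrite reflE subrK.
Qed.

Lemma refl_conj a v x : dotp a a != 0 ->
  refl a (refl v x) = refl (refl a v) (refl a x).
Proof.
move=> ha; rewrite [refl v x]reflE reflB reflZ [RHS]reflE /cf !refl_iso //.
Qed.

Lemma refl_opp v x : refl (- v) x = refl v x.
Proof. by rewrite !reflE /cf dotpNl dotpNr dotpNr opprK mulrN mulNr scaleNr scalerN opprK. Qed.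

Lemma refl_orth_fix u v : dotp v u = 0 -> refl u v = v.
Proof. by move=> h; rewrite reflE /cf h mulr0 mul0r scale0r subr0. Qed.

Lemma refl_comm u v x : dotp u v = 0 -> refl u (refl v x) = refl v (refl u x).
Proof.
move=> h; rewrite !reflE /cf !(dotpBl, dotpZl) (dotpC v u) h mulr0 subr0.
apply/rowP => i; rewrite !mxE. ring.
Qed.

Lemma refl_pair u v x : dotp u v = 0 -> dotp u u = dotp v v -> dotp u u != 0 ->
  refl u (refl v x) = refl ((1/2) *: (u + v)) (refl ((1/2) *: (u - v)) x).
Proof.
move=> huv hn hu.
rewrite !reflE /cf.
rewrite !(dotpBl, dotpDl, dotpZl, dotpBr, dotpDr, dotpZr, dotpNl).
rewrite (dotpC v u) huv -hn.
apply/rowP => i; rewrite !mxE.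
move: (dotp x u) (dotp x v) (x 0 i) (u 0 i) (v 0 i) hu; move: (dotp u u) => N a b c d e hN.
field; by rewrite hN andbT -mulr2n mulrn_eq0 negb_or hN.
Qed.
End Alg.
Section RW.
Variable R : realFieldType.
Definition nz (s : seq (vec R)) := forall a, a \in s -> dotp a a != 0.

Lemma rw_cat s1 s2 (x : vec R) : reflword (s1 ++ s2) x = reflword s1 (reflword s2 x).
Proof. by rewrite /reflword foldr_cat. Qed.
Lemma rw_rcons s a (x : vec R) : reflword (rcons s a) x = reflword s (refl a x).
Proof. by rewrite -cats1 rw_cat. Qed.
Lemma rwB s (x y : vec R) : reflword s (x - y) = reflword s x - reflword s y.
Proof. by elim: s => //= a s IH; rewrite IH reflB. Qed.
Lemma nz_cons a s : nz (a :: s) -> dotp a a != 0 /\ nz s.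
Proof. by move=> h; split; [apply: h; rewrite inE eqxx | move=> b hb; apply: h; rewrite inE hb orbT]. Qed.
Lemma rw_iso s (x y : vec R) : nz s -> dotp (reflword s x) (reflword s y) = dotp x y.
Proof. by elim: s => //= a s IH /nz_cons [ha hs]; rewrite refl_iso ?IH. Qed.
Lemma rw_inv s (x : vec R) : nz s -> reflword (rev s) (reflword s x) = x.
Proof.
elim: s x => //= a s IH x /nz_cons [ha hs].
by rewrite rev_cons rw_rcons refl_invol ?IH.
Qed.
Lemma nz_rev s : nz s -> nz (rev s).
Proof. by move=> h a; rewrite mem_rev; apply: h. Qed.
Lemma rw_inv2 s (y : vec R) : nz s -> reflword s (reflword (rev s) y) = y.
Proof. by move=> h; have := rw_inv y (nz_rev h); rewrite revK. Qed.
Lemma rw_conj s (v x : vec R) : nz s -> reflword s (refl v x) = refl (reflword s v) (reflword s x).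
Proof. elim: s => [//|a s IH /nz_cons [ha hs]]. by rewrite /= IH // refl_conj. Qed.
End RW.

Definition rootsL : seq (seq int) := [:: [:: p4; p4; z0; z0; z0; z0; z0; z0];
  [:: p4; n4; z0; z0; z0; z0; z0; z0];
  [:: n4; p4; z0; z0; z0; z0; z0; z0];
  [:: n4; n4; z0; z0; z0; z0; z0; z0];
  [:: p4; z0; p4; z0; z0; z0; z0; z0];
  [:: p4; z0; n4; z0; z0; z0; z0; z0];
  [:: n4; z0; p4; z0; z0; z0; z0; z0];
  [:: n4; z0; n4; z0; z0; z0; z0; z0];
  [:: p4; z0; z0; p4; z0; z0; z0; z0];
  [:: p4; z0; z0; n4; z0; z0; z0; z0];
  [:: n4; z0; z0; p4; z0; z0; z0; z0];
  [:: n4; z0; z0; n4; z0; z0; z0; z0];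
  [:: p4; z0; z0; z0; p4; z0; z0; z0];
  [:: p4; z0; z0; z0; n4; z0; z0; z0];
  [:: n4; z0; z0; z0; p4; z0; z0; z0];
  [:: n4; z0; z0; z0; n4; z0; z0; z0];
  [:: p4; z0; z0; z0; z0; p4; z0; z0];
  [:: p4; z0; z0; z0; z0; n4; z0; z0];
  [:: n4; z0; z0; z0; z0; p4; z0; z0];
  [:: n4; z0; z0; z0; z0; n4; z0; z0];
  [:: p4; z0; z0; z0; z0; z0; p4; z0];
  [:: p4; z0; z0; z0; z0; z0; n4; z0];
  [:: n4; z0; z0; z0; z0; z0; p4; z0];
  [:: n4; z0; z0; z0; z0; z0; n4; z0];
  [:: p4; z0; z0; z0; z0; z0; z0; p4];
  [:: p4; z0; z0; z0; z0; z0; z0; n4];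
  [:: n4; z0; z0; z0; z0; z0; z0; p4];
  [:: n4; z0; z0; z0; z0; z0; z0; n4];
  [:: z0; p4; p4; z0; z0; z0; z0; z0];
  [:: z0; p4; n4; z0; z0; z0; z0; z0];
  [:: z0; n4; p4; z0; z0; z0; z0; z0];
  [:: z0; n4; n4; z0; z0; z0; z0; z0];
  [:: z0; p4; z0; p4; z0; z0; z0; z0];
  [:: z0; p4; z0; n4; z0; z0; z0; z0];
  [:: z0; n4; z0; p4; z0; z0; z0; z0];
  [:: z0; n4; z0; n4; z0; z0; z0; z0];
  [:: z0; p4; z0; z0; p4; z0; z0; z0];
  [:: z0; p4; z0; z0; n4; z0; z0; z0];
  [:: z0; n4; z0; z0; p4; z0; z0; z0];
  [:: z0; n4; z0; z0; n4; z0; z0; z0];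
  [:: z0; p4; z0; z0; z0; p4; z0; z0];
  [:: z0; p4; z0; z0; z0; n4; z0; z0];
  [:: z0; n4; z0; z0; z0; p4; z0; z0];
  [:: z0; n4; z0; z0; z0; n4; z0; z0];
  [:: z0; p4; z0; z0; z0; z0; p4; z0];
  [:: z0; p4; z0; z0; z0; z0; n4; z0];
  [:: z0; n4; z0; z0; z0; z0; p4; z0];
  [:: z0; n4; z0; z0; z0; z0; n4; z0];
  [:: z0; p4; z0; z0; z0; z0; z0; p4];
  [:: z0; p4; z0; z0; z0; z0; z0; n4];
  [:: z0; n4; z0; z0; z0; z0; z0; p4];
  [:: z0; n4; z0; z0; z0; z0; z0; n4];
  [:: z0; z0; p4; p4; z0; z0; z0; z0];
  [:: z0; z0; p4; n4; z0; z0; z0; z0];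
  [:: z0; z0; n4; p4; z0; z0; z0; z0];
  [:: z0; z0; n4; n4; z0; z0; z0; z0];
  [:: z0; z0; p4; z0; p4; z0; z0; z0];
  [:: z0; z0; p4; z0; n4; z0; z0; z0];
  [:: z0; z0; n4; z0; p4; z0; z0; z0];
  [:: z0; z0; n4; z0; n4; z0; z0; z0];
  [:: z0; z0; p4; z0; z0; p4; z0; z0];
  [:: z0; z0; p4; z0; z0; n4; z0; z0];
  [:: z0; z0; n4; z0; z0; p4; z0; z0];
  [:: z0; z0; n4; z0; z0; n4; z0; z0];
  [:: z0; z0; p4; z0; z0; z0; p4; z0];
  [:: z0; z0; p4; z0; z0; z0; n4; z0];
  [:: z0; z0; n4; z0; z0; z0; p4; z0];
  [:: z0; z0; n4; z0; z0; z0; n4; z0];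
  [:: z0; z0; p4; z0; z0; z0; z0; p4];
  [:: z0; z0; p4; z0; z0; z0; z0; n4];
  [:: z0; z0; n4; z0; z0; z0; z0; p4];
  [:: z0; z0; n4; z0; z0; z0; z0; n4];
  [:: z0; z0; z0; p4; p4; z0; z0; z0];
  [:: z0; z0; z0; p4; n4; z0; z0; z0];
  [:: z0; z0; z0; n4; p4; z0; z0; z0];
  [:: z0; z0; z0; n4; n4; z0; z0; z0];
  [:: z0; z0; z0; p4; z0; p4; z0; z0];
  [:: z0; z0; z0; p4; z0; n4; z0; z0];
  [:: z0; z0; z0; n4; z0; p4; z0; z0];
  [:: z0; z0; z0; n4; z0; n4; z0; z0];
  [:: z0; z0; z0; p4; z0; z0; p4; z0];
  [:: z0; z0; z0; p4; z0; z0; n4; z0];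
  [:: z0; z0; z0; n4; z0; z0; p4; z0];
  [:: z0; z0; z0; n4; z0; z0; n4; z0];
  [:: z0; z0; z0; p4; z0; z0; z0; p4];
  [:: z0; z0; z0; p4; z0; z0; z0; n4];
  [:: z0; z0; z0; n4; z0; z0; z0; p4];
  [:: z0; z0; z0; n4; z0; z0; z0; n4];
  [:: z0; z0; z0; z0; p4; p4; z0; z0];
  [:: z0; z0; z0; z0; p4; n4; z0; z0];
  [:: z0; z0; z0; z0; n4; p4; z0; z0];
  [:: z0; z0; z0; z0; n4; n4; z0; z0];
  [:: z0; z0; z0; z0; p4; z0; p4; z0];
  [:: z0; z0; z0; z0; p4; z0; n4; z0];
  [:: z0; z0; z0; z0; n4; z0; p4; z0];
  [:: z0; z0; z0; z0; n4; z0; n4; z0];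
  [:: z0; z0; z0; z0; p4; z0; z0; p4];
  [:: z0; z0; z0; z0; p4; z0; z0; n4];
  [:: z0; z0; z0; z0; n4; z0; z0; p4];
  [:: z0; z0; z0; z0; n4; z0; z0; n4];
  [:: z0; z0; z0; z0; z0; p4; p4; z0];
  [:: z0; z0; z0; z0; z0; p4; n4; z0];
  [:: z0; z0; z0; z0; z0; n4; p4; z0];
  [:: z0; z0; z0; z0; z0; n4; n4; z0];
  [:: z0; z0; z0; z0; z0; p4; z0; p4];
  [:: z0; z0; z0; z0; z0; p4; z0; n4];
  [:: z0; z0; z0; z0; z0; n4; z0; p4];
  [:: z0; z0; z0; z0; z0; n4; z0; n4];
  [:: z0; z0; z0; z0; z0; z0; p4; p4];
  [:: z0; z0; z0; z0; z0; z0; p4; n4];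
  [:: z0; z0; z0; z0; z0; z0; n4; p4];
  [:: z0; z0; z0; z0; z0; z0; n4; n4];
  [:: p2; p2; p2; p2; p2; p2; p2; p2];
  [:: p2; p2; p2; p2; p2; p2; n2; n2];
  [:: p2; p2; p2; p2; p2; n2; p2; n2];
  [:: p2; p2; p2; p2; p2; n2; n2; p2];
  [:: p2; p2; p2; p2; n2; p2; p2; n2];
  [:: p2; p2; p2; p2; n2; p2; n2; p2];
  [:: p2; p2; p2; p2; n2; n2; p2; p2];
  [:: p2; p2; p2; p2; n2; n2; n2; n2];
  [:: p2; p2; p2; n2; p2; p2; p2; n2];
  [:: p2; p2; p2; n2; p2; p2; n2; p2];
  [:: p2; p2; p2; n2; p2; n2; p2; p2];
  [:: p2; p2; p2; n2; p2; n2; n2; n2];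
  [:: p2; p2; p2; n2; n2; p2; p2; p2];
  [:: p2; p2; p2; n2; n2; p2; n2; n2];
  [:: p2; p2; p2; n2; n2; n2; p2; n2];
  [:: p2; p2; p2; n2; n2; n2; n2; p2];
  [:: p2; p2; n2; p2; p2; p2; p2; n2];
  [:: p2; p2; n2; p2; p2; p2; n2; p2];
  [:: p2; p2; n2; p2; p2; n2; p2; p2];
  [:: p2; p2; n2; p2; p2; n2; n2; n2];
  [:: p2; p2; n2; p2; n2; p2; p2; p2];
  [:: p2; p2; n2; p2; n2; p2; n2; n2];
  [:: p2; p2; n2; p2; n2; n2; p2; n2];
  [:: p2; p2; n2; p2; n2; n2; n2; p2];
  [:: p2; p2; n2; n2; p2; p2; p2; p2];
  [:: p2; p2; n2; n2; p2; p2; n2; n2];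
  [:: p2; p2; n2; n2; p2; n2; p2; n2];
  [:: p2; p2; n2; n2; p2; n2; n2; p2];
  [:: p2; p2; n2; n2; n2; p2; p2; n2];
  [:: p2; p2; n2; n2; n2; p2; n2; p2];
  [:: p2; p2; n2; n2; n2; n2; p2; p2];
  [:: p2; p2; n2; n2; n2; n2; n2; n2];
  [:: p2; n2; p2; p2; p2; p2; p2; n2];
  [:: p2; n2; p2; p2; p2; p2; n2; p2];
  [:: p2; n2; p2; p2; p2; n2; p2; p2];
  [:: p2; n2; p2; p2; p2; n2; n2; n2];
  [:: p2; n2; p2; p2; n2; p2; p2; p2];
  [:: p2; n2; p2; p2; n2; p2; n2; n2];
  [:: p2; n2; p2; p2; n2; n2; p2; n2];
  [:: p2; n2; p2; p2; n2; n2; n2; p2];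
  [:: p2; n2; p2; n2; p2; p2; p2; p2];
  [:: p2; n2; p2; n2; p2; p2; n2; n2];
  [:: p2; n2; p2; n2; p2; n2; p2; n2];
  [:: p2; n2; p2; n2; p2; n2; n2; p2];
  [:: p2; n2; p2; n2; n2; p2; p2; n2];
  [:: p2; n2; p2; n2; n2; p2; n2; p2];
  [:: p2; n2; p2; n2; n2; n2; p2; p2];
  [:: p2; n2; p2; n2; n2; n2; n2; n2];
  [:: p2; n2; n2; p2; p2; p2; p2; p2];
  [:: p2; n2; n2; p2; p2; p2; n2; n2];
  [:: p2; n2; n2; p2; p2; n2; p2; n2];
  [:: p2; n2; n2; p2; p2; n2; n2; p2];
  [:: p2; n2; n2; p2; n2; p2; p2; n2];
  [:: p2; n2; n2; p2; n2; p2; n2; p2];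
  [:: p2; n2; n2; p2; n2; n2; p2; p2];
  [:: p2; n2; n2; p2; n2; n2; n2; n2];
  [:: p2; n2; n2; n2; p2; p2; p2; n2];
  [:: p2; n2; n2; n2; p2; p2; n2; p2];
  [:: p2; n2; n2; n2; p2; n2; p2; p2];
  [:: p2; n2; n2; n2; p2; n2; n2; n2];
  [:: p2; n2; n2; n2; n2; p2; p2; p2];
  [:: p2; n2; n2; n2; n2; p2; n2; n2];
  [:: p2; n2; n2; n2; n2; n2; p2; n2];
  [:: p2; n2; n2; n2; n2; n2; n2; p2];
  [:: n2; p2; p2; p2; p2; p2; p2; n2];
  [:: n2; p2; p2; p2; p2; p2; n2; p2];
  [:: n2; p2; p2; p2; p2; n2; p2; p2];
  [:: n2; p2; p2; p2; p2; n2; n2; n2];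
  [:: n2; p2; p2; p2; n2; p2; p2; p2];
  [:: n2; p2; p2; p2; n2; p2; n2; n2];
  [:: n2; p2; p2; p2; n2; n2; p2; n2];
  [:: n2; p2; p2; p2; n2; n2; n2; p2];
  [:: n2; p2; p2; n2; p2; p2; p2; p2];
  [:: n2; p2; p2; n2; p2; p2; n2; n2];
  [:: n2; p2; p2; n2; p2; n2; p2; n2];
  [:: n2; p2; p2; n2; p2; n2; n2; p2];
  [:: n2; p2; p2; n2; n2; p2; p2; n2];
  [:: n2; p2; p2; n2; n2; p2; n2; p2];
  [:: n2; p2; p2; n2; n2; n2; p2; p2];
  [:: n2; p2; p2; n2; n2; n2; n2; n2];
  [:: n2; p2; n2; p2; p2; p2; p2; p2];
  [:: n2; p2; n2; p2; p2; p2; n2; n2];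
  [:: n2; p2; n2; p2; p2; n2; p2; n2];
  [:: n2; p2; n2; p2; p2; n2; n2; p2];
  [:: n2; p2; n2; p2; n2; p2; p2; n2];
  [:: n2; p2; n2; p2; n2; p2; n2; p2];
  [:: n2; p2; n2; p2; n2; n2; p2; p2];
  [:: n2; p2; n2; p2; n2; n2; n2; n2];
  [:: n2; p2; n2; n2; p2; p2; p2; n2];
  [:: n2; p2; n2; n2; p2; p2; n2; p2];
  [:: n2; p2; n2; n2; p2; n2; p2; p2];
  [:: n2; p2; n2; n2; p2; n2; n2; n2];
  [:: n2; p2; n2; n2; n2; p2; p2; p2];
  [:: n2; p2; n2; n2; n2; p2; n2; n2];
  [:: n2; p2; n2; n2; n2; n2; p2; n2];
  [:: n2; p2; n2; n2; n2; n2; n2; p2];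
  [:: n2; n2; p2; p2; p2; p2; p2; p2];
  [:: n2; n2; p2; p2; p2; p2; n2; n2];
  [:: n2; n2; p2; p2; p2; n2; p2; n2];
  [:: n2; n2; p2; p2; p2; n2; n2; p2];
  [:: n2; n2; p2; p2; n2; p2; p2; n2];
  [:: n2; n2; p2; p2; n2; p2; n2; p2];
  [:: n2; n2; p2; p2; n2; n2; p2; p2];
  [:: n2; n2; p2; p2; n2; n2; n2; n2];
  [:: n2; n2; p2; n2; p2; p2; p2; n2];
  [:: n2; n2; p2; n2; p2; p2; n2; p2];
  [:: n2; n2; p2; n2; p2; n2; p2; p2];
  [:: n2; n2; p2; n2; p2; n2; n2; n2];
  [:: n2; n2; p2; n2; n2; p2; p2; p2];
  [:: n2; n2; p2; n2; n2; p2; n2; n2];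
  [:: n2; n2; p2; n2; n2; n2; p2; n2];
  [:: n2; n2; p2; n2; n2; n2; n2; p2];
  [:: n2; n2; n2; p2; p2; p2; p2; n2];
  [:: n2; n2; n2; p2; p2; p2; n2; p2];
  [:: n2; n2; n2; p2; p2; n2; p2; p2];
  [:: n2; n2; n2; p2; p2; n2; n2; n2];
  [:: n2; n2; n2; p2; n2; p2; p2; p2];
  [:: n2; n2; n2; p2; n2; p2; n2; n2];
  [:: n2; n2; n2; p2; n2; n2; p2; n2];
  [:: n2; n2; n2; p2; n2; n2; n2; p2];
  [:: n2; n2; n2; n2; p2; p2; p2; p2];
  [:: n2; n2; n2; n2; p2; p2; n2; n2];
  [:: n2; n2; n2; n2; p2; n2; p2; n2];
  [:: n2; n2; n2; n2; p2; n2; n2; p2];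
  [:: n2; n2; n2; n2; n2; p2; p2; n2];
  [:: n2; n2; n2; n2; n2; p2; n2; p2];
  [:: n2; n2; n2; n2; n2; n2; p2; p2];
  [:: n2; n2; n2; n2; n2; n2; n2; n2]].
Definition nodesD : seq (seq nat * seq (nat * seq nat * nat) * seq nat * seq nat) := [:: ([:: ], [:: (0, [:: ], 0); (1, [:: 28; 29], 0); (2, [:: 4; 5], 0); (3, [:: 0], 0); (4, [:: 29], 0); (5, [:: 28], 0); (6, [:: 0; 28], 0); (7, [:: 0; 29], 0); (8, [:: 33], 0); (9, [:: 32], 0); (10, [:: 0; 32], 0); (11, [:: 0; 33], 0); (12, [:: 37], 0); (13, [:: 36], 0); (14, [:: 0; 36], 0); (15, [:: 0; 37], 0); (16, [:: 41], 0); (17, [:: 40], 0); (18, [:: 0; 40], 0); (19, [:: 0; 41], 0); (20, [:: 45], 0); (21, [:: 44], 0); (22, [:: 0; 44], 0); (23, [:: 0; 45], 0); (24, [:: 49], 0); (25, [:: 48], 0); (26, [:: 0; 48], 0); (27, [:: 0; 49], 0); (28, [:: 5], 0); (29, [:: 4], 0); (30, [:: 0; 4], 0); (31, [:: 0; 5], 0); (32, [:: 9], 0); (33, [:: 8], 0); (34, [:: 0; 8], 0); (35, [:: 0; 9], 0); (36, [:: 13], 0); (37, [:: 12], 0); (38, [:: 0; 12], 0); (39, [:: 0; 13], 0); (40, [:: 17], 0); (41, [:: 16], 0); (42, [:: 0; 16], 0); (43, [:: 0; 17], 0); (44, [:: 21], 0); (45, [:: 20], 0); (46, [:: 0; 20],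 0); (47, [:: 0; 21], 0); (48, [:: 25], 0); (49, [:: 24], 0); (50, [:: 0; 24], 0); (51, [:: 0; 25], 0); (52, [:: 5; 33], 0); (53, [:: 5; 32], 0); (54, [:: 4; 33], 0); (55, [:: 4; 32], 0); (56, [:: 5; 37], 0); (57, [:: 5; 36], 0); (58, [:: 4; 37], 0); (59, [:: 4; 36], 0); (60, [:: 5; 41], 0); (61, [:: 5; 40], 0); (62, [:: 4; 41], 0); (63, [:: 4; 40], 0); (64, [:: 5; 45], 0); (65, [:: 5; 44], 0); (66, [:: 4; 45], 0); (67, [:: 4; 44], 0); (68, [:: 5; 49], 0); (69, [:: 5; 48], 0); (70, [:: 4; 49], 0); (71, [:: 4; 48], 0); (72, [:: 9; 37], 0); (73, [:: 9; 36], 0); (74, [:: 8; 37], 0); (75, [:: 8; 36], 0); (76, [:: 9; 41], 0); (77, [:: 9; 40], 0); (78, [:: 8; 41], 0); (79, [:: 8; 40], 0); (80, [:: 9; 45], 0); (81, [:: 9; 44], 0); (82, [:: 8; 45], 0); (83, [:: 8; 44], 0); (84, [:: 9; 49], 0); (85, [:: 9; 48], 0); (86, [:: 8; 49], 0); (87, [:: 8; 48], 0); (88, [:: 13; 41], 0); (89, [:: 13; 40], 0); (90, [:: 12; 41], 0); (91, [:: 12; 40], 0); (92, [:: 13; 45], 0); (93, [:: 13; 44], 0); (94, [:: 12; 45], 0); (95, [:: 12; 44], 0); (96, [:: 13; 49], 0); (97, [:: 13; 48], 0); (98, [:: 12; 49], 0); (99, [:: 12; 48], 0); (100, [:: 17;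 45], 0); (101, [:: 17; 44], 0); (102, [:: 16; 45], 0); (103, [:: 16; 44], 0); (104, [:: 17; 49], 0); (105, [:: 17; 48], 0); (106, [:: 16; 49], 0); (107, [:: 16; 48], 0); (108, [:: 21; 49], 0); (109, [:: 21; 48], 0); (110, [:: 20; 49], 0); (111, [:: 20; 48], 0); (112, [:: 143], 0); (113, [:: 142], 0); (114, [:: 141], 0); (115, [:: 140], 0); (116, [:: 139], 0); (117, [:: 138], 0); (118, [:: 137], 0); (119, [:: 136], 0); (120, [:: 135], 0); (121, [:: 134], 0); (122, [:: 133], 0); (123, [:: 132], 0); (124, [:: 131], 0); (125, [:: 130], 0); (126, [:: 129], 0); (127, [:: 128], 0); (128, [:: 127], 0); (129, [:: 126], 0); (130, [:: 125], 0); (131, [:: 124], 0); (132, [:: 123], 0); (133, [:: 122], 0); (134, [:: 121], 0); (135, [:: 120], 0); (136, [:: 119], 0); (137, [:: 118], 0); (138, [:: 117], 0); (139, [:: 116], 0); (140, [:: 115], 0); (141, [:: 114], 0); (142, [:: 113], 0); (143, [:: 112], 0); (144, [:: 29; 127], 0); (145, [:: 29; 126], 0); (146, [:: 29; 125], 0); (147, [:: 29; 124], 0); (148, [:: 29; 123], 0); (149, [:: 29; 122], 0); (150, [:: 29; 121], 0); (151, [:: 29; 120], 0); (152, [:: 29; 119], 0); (153, [:: 29; 118], 0); (154, [:: 29; 117], 0); (155, [:: 29; 116], 0); (156, [:: 29; 115], 0); (157, [:: 29; 114], 0); (158, [:: 29; 113], 0); (159, [:: 29; 112], 0); (160, [::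 28; 143], 0); (161, [:: 28; 142], 0); (162, [:: 28; 141], 0); (163, [:: 28; 140], 0); (164, [:: 28; 139], 0); (165, [:: 28; 138], 0); (166, [:: 28; 137], 0); (167, [:: 28; 136], 0); (168, [:: 28; 135], 0); (169, [:: 28; 134], 0); (170, [:: 28; 133], 0); (171, [:: 28; 132], 0); (172, [:: 28; 131], 0); (173, [:: 28; 130], 0); (174, [:: 28; 129], 0); (175, [:: 28; 128], 0); (176, [:: 5; 127], 0); (177, [:: 5; 126], 0); (178, [:: 5; 125], 0); (179, [:: 5; 124], 0); (180, [:: 5; 123], 0); (181, [:: 5; 122], 0); (182, [:: 5; 121], 0); (183, [:: 5; 120], 0); (184, [:: 5; 119], 0); (185, [:: 5; 118], 0); (186, [:: 5; 117], 0); (187, [:: 5; 116], 0); (188, [:: 5; 115], 0); (189, [:: 5; 114], 0); (190, [:: 5; 113], 0); (191, [:: 5; 112], 0); (192, [:: 4; 143], 0); (193, [:: 4; 142], 0); (194, [:: 4; 141], 0); (195, [:: 4; 140], 0); (196, [:: 4; 139], 0); (197, [:: 4; 138], 0); (198, [:: 4; 137], 0); (199, [:: 4; 136], 0); (200, [:: 4; 135], 0); (201, [:: 4; 134], 0); (202, [:: 4; 133], 0); (203, [:: 4; 132], 0); (204, [:: 4; 131], 0); (205, [:: 4; 130], 0); (206, [:: 4; 129], 0); (207, [:: 4; 128], 0); (208, [:: 0; 112], 0); (209, [:: 0; 113], 0); (210, [:: 0; 114], 0); (211, [:: 0; 115], 0); (212, [:: 0; 116], 0); (213, [:: 0; 117],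 0); (214, [:: 0; 118], 0); (215, [:: 0; 119], 0); (216, [:: 0; 120], 0); (217, [:: 0; 121], 0); (218, [:: 0; 122], 0); (219, [:: 0; 123], 0); (220, [:: 0; 124], 0); (221, [:: 0; 125], 0); (222, [:: 0; 126], 0); (223, [:: 0; 127], 0); (224, [:: 0; 128], 0); (225, [:: 0; 129], 0); (226, [:: 0; 130], 0); (227, [:: 0; 131], 0); (228, [:: 0; 132], 0); (229, [:: 0; 133], 0); (230, [:: 0; 134], 0); (231, [:: 0; 135], 0); (232, [:: 0; 136], 0); (233, [:: 0; 137], 0); (234, [:: 0; 138], 0); (235, [:: 0; 139], 0); (236, [:: 0; 140], 0); (237, [:: 0; 141], 0); (238, [:: 0; 142], 0); (239, [:: 0; 143], 0)], [:: ], [:: ]);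
  ([:: 0], [:: (1, [:: ], 1); (2, [:: 1], 1); (52, [:: 168; 175], 1); (53, [:: 160; 167], 1); (54, [:: 152; 159], 1); (55, [:: 144; 151], 1); (56, [:: 164; 175], 1); (57, [:: 160; 171], 1); (58, [:: 148; 159], 1); (59, [:: 144; 155], 1); (60, [:: 162; 175], 1); (61, [:: 160; 173], 1); (62, [:: 146; 159], 1); (63, [:: 144; 157], 1); (64, [:: 161; 175], 1); (65, [:: 160; 174], 1); (66, [:: 145; 159], 1); (67, [:: 144; 158], 1); (68, [:: 161; 174], 1); (69, [:: 160; 175], 1); (70, [:: 144; 159], 1); (71, [:: 145; 158], 1); (72, [:: 156; 175], 1); (73, [:: 152; 171], 1); (74, [:: 148; 167], 1); (75, [:: 144; 163], 1); (76, [:: 154; 175], 1); (77, [:: 152; 173], 1); (78, [:: 146; 167], 1); (79, [:: 144; 165], 1); (80, [:: 153; 175], 1); (81, [:: 152; 174], 1); (82, [:: 145; 167], 1); (83, [:: 144; 166], 1); (84, [:: 153; 174], 1); (85, [:: 152; 175], 1); (86, [:: 144; 167], 1); (87, [:: 145; 166], 1); (88, [:: 150; 175], 1); (89, [:: 148; 173], 1); (90, [:: 146; 171], 1); (91, [:: 144; 169], 1); (92, [:: 149; 175], 1); (93, [:: 148; 174], 1); (94, [:: 145; 171], 1); (95, [:: 144; 170], 1); (96, [:: 149; 174], 1); (97, [:: 148; 175], 1); (98, [:: 144; 171], 1); (99, [:: 145; 170], 1); (100, [:: 147; 175], 1); (101, [:: 146; 174], 1); (102, [:: 145; 173], 1);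 (103, [:: 144; 172], 1); (104, [:: 147; 174], 1); (105, [:: 146; 175], 1); (106, [:: 144; 173], 1); (107, [:: 145; 172], 1); (108, [:: 147; 173], 1); (109, [:: 145; 175], 1); (110, [:: 144; 174], 1); (111, [:: 146; 172], 1); (144, [:: 175], 1); (145, [:: 174], 1); (146, [:: 173], 1); (147, [:: 172], 1); (148, [:: 171], 1); (149, [:: 170], 1); (150, [:: 169], 1); (151, [:: 168], 1); (152, [:: 167], 1); (153, [:: 166], 1); (154, [:: 165], 1); (155, [:: 164], 1); (156, [:: 163], 1); (157, [:: 162], 1); (158, [:: 161], 1); (159, [:: 160], 1); (160, [:: 159], 1); (161, [:: 158], 1); (162, [:: 157], 1); (163, [:: 156], 1); (164, [:: 155], 1); (165, [:: 154], 1); (166, [:: 153], 1); (167, [:: 152], 1); (168, [:: 151], 1); (169, [:: 150], 1); (170, [:: 149], 1); (171, [:: 148], 1); (172, [:: 147], 1); (173, [:: 146], 1); (174, [:: 145], 1); (175, [:: 144], 1); (176, [:: 1; 144], 1); (177, [:: 1; 145], 1); (178, [:: 1; 146], 1); (179, [:: 1; 147], 1); (180, [:: 1; 148], 1); (181, [:: 1; 149], 1); (182, [:: 1; 150], 1); (183, [:: 1; 151], 1); (184, [:: 1; 152], 1); (185, [:: 1; 153], 1); (186, [:: 1; 154], 1); (187, [:: 1; 155], 1); (188, [:: 1; 156], 1); (189, [:: 1; 157], 1); (190, [:: 1; 158], 1); (191, [:: 1; 159], 1); (192, [:: 1; 160], 1); (193, [:: 1; 161], 1); (194, [:: 1; 162],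 1); (195, [:: 1; 163], 1); (196, [:: 1; 164], 1); (197, [:: 1; 165], 1); (198, [:: 1; 166], 1); (199, [:: 1; 167], 1); (200, [:: 1; 168], 1); (201, [:: 1; 169], 1); (202, [:: 1; 170], 1); (203, [:: 1; 171], 1); (204, [:: 1; 172], 1); (205, [:: 1; 173], 1); (206, [:: 1; 174], 1); (207, [:: 1; 175], 1)], [:: 0], [:: ]);
  ([:: 0; 1], [:: (52, [:: ], 52); (53, [:: 72; 73], 52); (54, [:: 56; 57], 52); (55, [:: 52], 52); (56, [:: 73], 52); (57, [:: 72], 52); (58, [:: 52; 72], 52); (59, [:: 52; 73], 52); (60, [:: 77], 52); (61, [:: 76], 52); (62, [:: 52; 76], 52); (63, [:: 52; 77], 52); (64, [:: 81], 52); (65, [:: 80], 52); (66, [:: 52; 80], 52); (67, [:: 52; 81], 52); (68, [:: 85], 52); (69, [:: 84], 52); (70, [:: 52; 84], 52); (71, [:: 52; 85], 52); (72, [:: 57], 52); (73, [:: 56], 52); (74, [:: 52; 56], 52); (75, [:: 52; 57], 52); (76, [:: 61], 52); (77, [:: 60], 52); (78, [:: 52; 60], 52); (79, [:: 52; 61], 52); (80, [:: 65], 52); (81, [:: 64], 52); (82, [:: 52; 64], 52); (83, [:: 52; 65], 52); (84, [:: 69], 52); (85, [:: 68], 52); (86, [:: 52; 68], 52); (87, [:: 52; 69], 52); (88, [:: 57; 77], 52); (89, [:: 57; 76], 52); (90, [:: 56; 77], 52); (91, [:: 56; 76], 52); (92, [:: 57; 81], 52); (93, [:: 57; 80], 52);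 (94, [:: 56; 81], 52); (95, [:: 56; 80], 52); (96, [:: 57; 85], 52); (97, [:: 57; 84], 52); (98, [:: 56; 85], 52); (99, [:: 56; 84], 52); (100, [:: 61; 81], 52); (101, [:: 61; 80], 52); (102, [:: 60; 81], 52); (103, [:: 60; 80], 52); (104, [:: 61; 85], 52); (105, [:: 61; 84], 52); (106, [:: 60; 85], 52); (107, [:: 60; 84], 52); (108, [:: 65; 85], 52); (109, [:: 65; 84], 52); (110, [:: 64; 85], 52); (111, [:: 64; 84], 52)], [:: 0; 1], [:: ]);
  ([:: 0; 1; 52], [:: (53, [:: ], 53); (54, [:: 53], 53); (88, [:: ], 88); (89, [:: 100; 101], 88); (90, [:: 92; 93], 88); (91, [:: 88], 88); (92, [:: 101], 88); (93, [:: 100], 88); (94, [:: 88; 100], 88); (95, [:: 88; 101], 88); (96, [:: 105], 88); (97, [:: 104], 88); (98, [:: 88; 104], 88); (99, [:: 88; 105], 88); (100, [:: 93], 88); (101, [:: 92], 88); (102, [:: 88; 92], 88); (103, [:: 88; 93], 88); (104, [:: 97], 88); (105, [:: 96], 88); (106, [:: 88; 96], 88); (107, [:: 88; 97], 88); (108, [:: 93; 105], 88); (109, [:: 93; 104], 88); (110, [:: 92; 105], 88); (111, [:: 92; 104], 88)], [:: 0; 1; 52], [:: ]);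
  ([:: 0; 1; 52; 53], [:: (88, [:: ], 88); (89, [:: 100; 101], 88); (90, [:: 92; 93], 88); (91, [:: 88], 88); (92, [:: 101], 88); (93, [:: 100], 88); (94, [:: 88; 100], 88); (95, [:: 88; 101], 88); (96, [:: 105], 88); (97, [:: 104], 88); (98, [:: 88; 104], 88); (99, [:: 88; 105], 88); (100, [:: 93], 88); (101, [:: 92], 88); (102, [:: 88; 92], 88); (103, [:: 88; 93], 88); (104, [:: 97], 88); (105, [:: 96], 88); (106, [:: 88; 96], 88); (107, [:: 88; 97], 88); (108, [:: 93; 105], 88); (109, [:: 93; 104], 88); (110, [:: 92; 105], 88); (111, [:: 92; 104], 88)], [:: 0; 1; 52; 53], [:: ]);
  ([:: 0; 1; 52; 53; 88], [:: (89, [:: ], 89); (90, [:: 89], 89); (108, [:: ], 108); (109, [:: ], 109); (110, [:: 109], 109); (111, [:: 108], 108)], [:: 0; 1; 52; 53; 88], [:: ]);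
  ([:: 0; 1; 52; 53; 88; 89], [:: (108, [:: ], 108); (109, [:: ], 109); (110, [:: 109], 109); (111, [:: 108], 108)], [:: 0; 1; 52; 53; 88; 89], [:: ]);
  ([:: 0; 1; 52; 53; 88; 89; 108], [:: (109, [:: ], 109); (110, [:: 109], 109)], [:: 0; 1; 52; 53; 88; 89; 108], [:: ]);
  ([:: 0; 1; 52; 53; 88; 89; 108; 109], [:: ], [:: 0; 1; 52; 53; 88; 89; 108; 109], [:: ]);
  ([:: 0; 1; 52; 53; 88; 89; 109], [:: (108, [:: ], 108); (111, [:: 108], 108)], [:: 0; 1; 52; 53; 88; 89; 108], [:: 29; 28; 57; 56; 93; 92; 109]);
  ([:: 0; 1; 52; 53; 88; 89; 109; 108], [:: ], [:: 0; 1; 52; 53; 88; 89; 108; 109], [:: 29; 28; 57; 56; 93; 92; 109; 108]);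
  ([:: 0; 1; 52; 53; 88; 108], [:: (89, [:: ], 89); (90, [:: 89], 89); (109, [:: ], 109); (110, [:: 109], 109)], [:: 0; 1; 52; 53; 88; 89], [:: 32; 5; 175; 168; 105; 92; 108]);
  ([:: 0; 1; 52; 53; 88; 108; 89], [:: (109, [:: ], 109); (110, [:: 109], 109)], [:: 0; 1; 52; 53; 88; 89; 108], [:: 32; 5; 175; 168; 105; 92; 108; 89]);
  ([:: 0; 1; 52; 53; 88; 108; 89; 109], [:: ], [:: 0; 1; 52; 53; 88; 89; 108; 109], [:: 32; 5; 175; 168; 105; 92; 108; 89]);
  ([:: 0; 1; 52; 53; 88; 108; 109], [:: (89, [:: ], 89); (90, [:: 89], 89)], [:: 0; 1; 52; 53; 88; 89; 108], [:: 33; 5; 77; 57; 105; 93]);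
  ([:: 0; 1; 52; 53; 88; 108; 109; 89], [:: ], [:: 0; 1; 52; 53; 88; 89; 108; 109], [:: 48; 21; 173; 147; 77; 56; 88; 53; 41; 13; 167; 160; 73; 72; 101; 100; 108; 89; 32; 5; 175; 168; 105; 92; 89; 108; 48; 21; 173; 147; 77; 56; 53; 101; 100; 108; 109; 89]);
  ([:: 0; 1; 52; 53; 88; 109], [:: (89, [:: ], 89); (90, [:: 89], 89); (108, [:: ], 108); (111, [:: 108], 108)], [:: 0; 1; 52; 53; 88; 89], [:: 33; 5; 167; 160; 104; 92; 109]);
  ([:: 0; 1; 52; 53; 88; 109; 89], [:: (108, [:: ], 108); (111, [:: 108], 108)], [:: 0; 1; 52; 53; 88; 89; 108], [:: 49; 21; 173; 147; 84; 65; 93; 92; 109; 89; 49; 21; 175; 145; 76; 56; 53; 48; 21; 173; 147; 77; 56; 53; 104; 93; 109]);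
  ([:: 0; 1; 52; 53; 88; 109; 89; 108], [:: ], [:: 0; 1; 52; 53; 88; 89; 108; 109], [:: 48; 21; 173; 147; 77; 56; 88; 53; 41; 13; 167; 160; 73; 72; 101; 100; 108; 89; 32; 5; 175; 168; 105; 92; 89; 108; 32; 5; 167; 160; 104; 92; 109; 89]);
  ([:: 0; 1; 52; 53; 88; 109; 108], [:: (89, [:: ], 89); (90, [:: 89], 89)], [:: 0; 1; 52; 53; 88; 89; 108], [:: 33; 5; 167; 160; 104; 92; 109]);
  ([:: 0; 1; 52; 53; 88; 109; 108; 89], [:: ], [:: 0; 1; 52; 53; 88; 89; 108; 109], [:: 33; 5; 167; 160; 104; 92; 109; 89]);
  ([:: 0; 1; 52; 88], [:: (53, [:: ], 53); (54, [:: 53], 53); (89, [:: ], 89); (90, [:: 89], 89); (108, [:: ], 108); (109, [:: ], 109); (110, [:: 109], 109); (111, [:: 108], 108)], [:: 0; 1; 52; 88], [:: ]);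
  ([:: 0; 1; 52; 88; 53], [:: (89, [:: ], 89); (90, [:: 89], 89); (108, [:: ], 108); (109, [:: ], 109); (110, [:: 109], 109); (111, [:: 108], 108)], [:: 0; 1; 52; 53; 88], [:: ]);
  ([:: 0; 1; 52; 88; 53; 89], [:: (108, [:: ], 108); (109, [:: ], 109); (110, [:: 109], 109); (111, [:: 108], 108)], [:: 0; 1; 52; 53; 88; 89], [:: 76; 57]);
  ([:: 0; 1; 52; 88; 53; 89; 108], [:: (109, [:: ], 109); (110, [:: 109], 109)], [:: 0; 1; 52; 53; 88; 89; 108], [:: 173; 147; 77; 56; 88; 53]);
  ([:: 0; 1; 52; 88; 53; 89; 108; 109], [:: ], [:: 0; 1; 52; 53; 88; 89; 108; 109], [:: 48; 21; 173; 147; 77; 56; 88; 53]);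
  ([:: 0; 1; 52; 88; 53; 89; 109], [:: (108, [:: ], 108); (111, [:: 108], 108)], [:: 0; 1; 52; 53; 88; 89; 108], [:: 49; 21; 173; 147; 84; 65; 93; 92; 109; 89; 49; 21; 175; 145; 76; 56; 53; 48; 21; 167; 160; 73; 72; 104; 93; 89; 40; 13; 175; 150; 85; 64; 53; 108; 33; 5; 175; 150; 77; 57; 105; 93; 89]);
  ([:: 0; 1; 52; 88; 53; 89; 109; 108], [:: ], [:: 0; 1; 52; 53; 88; 89; 108; 109], [:: 48; 21; 173; 147; 77; 56; 88; 53; 29; 28; 57; 56; 93; 92; 109; 108]);
  ([:: 0; 1; 52; 88; 53; 108], [:: (89, [:: ], 89); (90, [:: 89], 89); (109, [:: ], 109); (110, [:: 109], 109)], [:: 0; 1; 52; 53; 88; 89], [:: 29; 28; 159; 152; 52; 104; 92; 109; 53; 175; 145; 76; 56; 89; 33; 5; 167; 160; 104; 92; 89; 109; 29; 28; 159; 152; 84; 64; 101; 100; 53; 108]);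
  ([:: 0; 1; 52; 88; 53; 108; 89], [:: (109, [:: ], 109); (110, [:: 109], 109)], [:: 0; 1; 52; 53; 88; 89; 108], [:: 49; 21; 173; 147; 84; 65; 93; 92; 109; 89; 49; 21; 175; 145; 76; 56; 53; 48; 21; 167; 160; 73; 72; 104; 93; 89; 40; 13; 175; 150; 85; 64; 53; 108]);
  ([:: 0; 1; 52; 88; 53; 108; 89; 109], [:: ], [:: 0; 1; 52; 53; 88; 89; 108; 109], [:: 48; 21; 173; 147; 77; 56; 88; 53; 32; 5; 175; 168; 105; 92; 108; 89]);
  ([:: 0; 1; 52; 88; 53; 108; 109], [:: (89, [:: ], 89); (90, [:: 89], 89)], [:: 0; 1; 52; 53; 88; 89; 108], [:: 49; 21; 173; 147; 84; 65; 93; 92; 109; 89; 49; 21; 175; 145; 76; 56; 53; 41; 13; 175; 145; 73; 72; 105; 93; 53; 108]);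
  ([:: 0; 1; 52; 88; 53; 108; 109; 89], [:: ], [:: 0; 1; 52; 53; 88; 89; 108; 109], [:: 48; 21; 173; 147; 77; 56; 88; 53; 41; 13; 167; 160; 73; 72; 101; 100; 108; 89; 32; 5; 175; 168; 105; 92; 89; 108; 32; 5; 167; 160; 104; 92; 109; 89; 49; 21; 175; 145; 76; 56; 93; 92; 89; 108; 53; 109; 40; 13; 173; 147; 73; 72; 104; 93; 53; 108]);
  ([:: 0; 1; 52; 88; 53; 109], [:: (89, [:: ], 89); (90, [:: 89], 89); (108, [:: ], 108); (111, [:: 108], 108)], [:: 0; 1; 52; 53; 88; 89], [:: 29; 28; 159; 152; 52; 104; 92; 109; 53; 41; 13; 173; 148; 84; 64; 53; 109]);
  ([:: 0; 1; 52; 88; 53; 109; 89], [:: (108, [:: ], 108); (111, [:: 108], 108)], [:: 0; 1; 52; 53; 88; 89; 108], [:: 49; 21; 173; 147; 84; 65; 93; 92; 109; 89; 49; 21; 175; 145; 76; 56; 53; 48; 21; 167; 160; 73; 72; 104; 93; 89; 40; 13; 175; 150; 85; 64; 53; 108; 29; 28; 57; 56; 93; 92; 109]);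
  ([:: 0; 1; 52; 88; 53; 109; 89; 108], [:: ], [:: 0; 1; 52; 53; 88; 89; 108; 109], [:: 48; 21; 173; 147; 77; 56; 88; 53; 41; 13; 167; 160; 73; 72; 101; 100; 108; 89; 40; 13; 175; 150; 85; 64; 53; 108]);
  ([:: 0; 1; 52; 88; 53; 109; 108], [:: (89, [:: ], 89); (90, [:: 89], 89)], [:: 0; 1; 52; 53; 88; 89; 108], [:: 49; 21; 173; 147; 84; 65; 93; 92; 109; 89; 49; 21; 175; 145; 76; 56; 53; 41; 13; 173; 148; 84; 64; 53; 109]);
  ([:: 0; 1; 52; 88; 53; 109; 108; 89], [:: ], [:: 0; 1; 52; 53; 88; 89; 108; 109], [:: 48; 21; 173; 147; 77; 56; 88; 53; 33; 5; 167; 160; 104; 92; 109; 89]);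
  ([:: 0; 1; 52; 88; 89], [:: (53, [:: ], 53); (54, [:: 53], 53); (108, [:: ], 108); (109, [:: ], 109); (110, [:: 109], 109); (111, [:: 108], 108)], [:: 0; 1; 52; 53; 88], [:: 77; 57]);
  ([:: 0; 1; 52; 88; 89; 53], [:: (108, [:: ], 108); (109, [:: ], 109); (110, [:: 109], 109); (111, [:: 108], 108)], [:: 0; 1; 52; 53; 88; 89], [:: 77; 57; 101; 100]);
  ([:: 0; 1; 52; 88; 89; 53; 108], [:: (109, [:: ], 109); (110, [:: 109], 109)], [:: 0; 1; 52; 53; 88; 89; 108], [:: 40; 13; 173; 147; 52; 89]);
  ([:: 0; 1; 52; 88; 89; 53; 108; 109], [:: ], [:: 0; 1; 52; 53; 88; 89; 108; 109], [:: 48; 21; 173; 147; 77; 56; 88; 53; 49; 21; 175; 145; 76; 56; 89; 53]);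
  ([:: 0; 1; 52; 88; 89; 53; 109], [:: (108, [:: ], 108); (111, [:: 108], 108)], [:: 0; 1; 52; 53; 88; 89; 108], [:: 49; 21; 175; 145; 76; 56; 93; 92; 89; 53; 109]);
  ([:: 0; 1; 52; 88; 89; 53; 109; 108], [:: ], [:: 0; 1; 52; 53; 88; 89; 108; 109], [:: 49; 21; 175; 145; 76; 56; 93; 92; 89; 53; 109; 108]);
  ([:: 0; 1; 52; 88; 89; 108], [:: (53, [:: ], 53); (54, [:: 53], 53); (109, [:: ], 109); (110, [:: 109], 109)], [:: 0; 1; 52; 53; 88; 89], [:: 29; 28; 159; 152; 52; 104; 92; 109; 53; 175; 145; 76; 56; 89; 33; 5; 167; 160; 104; 92; 89; 109; 29; 28; 57; 56; 93; 92; 108]);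
  ([:: 0; 1; 52; 88; 89; 108; 53], [:: (109, [:: ], 109); (110, [:: 109], 109)], [:: 0; 1; 52; 53; 88; 89; 108], [:: 49; 21; 173; 147; 84; 65; 93; 92; 109; 89; 49; 21; 175; 145; 76; 56; 53; 48; 21; 167; 160; 73; 72; 104; 93; 89; 40; 13; 175; 150; 85; 64; 53; 108; 49; 21; 175; 145; 76; 56; 89; 53]);
  ([:: 0; 1; 52; 88; 89; 108; 53; 109], [:: ], [:: 0; 1; 52; 53; 88; 89; 108; 109], [:: 48; 21; 173; 147; 77; 56; 88; 53; 41; 13; 167; 160; 73; 72; 101; 100; 108; 89; 32; 5; 175; 168; 105; 92; 89; 108; 32; 5; 167; 160; 104; 92; 109; 89; 49; 21; 175; 145; 76; 56; 93; 92; 89; 108; 53; 109]);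
  ([:: 0; 1; 52; 88; 89; 108; 109], [:: (53, [:: ], 53); (54, [:: 53], 53)], [:: 0; 1; 52; 53; 88; 89; 108], [:: 41; 13; 85; 65]);
  ([:: 0; 1; 52; 88; 89; 108; 109; 53], [:: ], [:: 0; 1; 52; 53; 88; 89; 108; 109], [:: 48; 21; 173; 147; 77; 56; 88; 53; 41; 13; 167; 160; 73; 72; 101; 100; 108; 89; 32; 5; 175; 168; 105; 92; 89; 108; 29; 28; 57; 56; 93; 92; 108; 109]);
  ([:: 0; 1; 52; 88; 89; 109], [:: (53, [:: ], 53); (54, [:: 53], 53); (108, [:: ], 108); (111, [:: 108], 108)], [:: 0; 1; 52; 53; 88; 89], [:: 29; 28; 159; 152; 52; 104; 92; 109; 53; 175; 145; 76; 56; 89; 33; 5; 167; 160; 104; 92; 89; 109]);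
  ([:: 0; 1; 52; 88; 89; 109; 53], [:: (108, [:: ], 108); (111, [:: 108], 108)], [:: 0; 1; 52; 53; 88; 89; 108], [:: 49; 21; 173; 147; 84; 65; 93; 92; 109; 89; 49; 21; 175; 145; 76; 56; 53; 48; 21; 167; 160; 73; 72; 104; 93; 89; 40; 13; 175; 150; 85; 64; 53; 108; 49; 21; 173; 148; 52; 104; 93; 89]);
  ([:: 0; 1; 52; 88; 89; 109; 53; 108], [:: ], [:: 0; 1; 52; 53; 88; 89; 108; 109], [:: 48; 21; 173; 147; 77; 56; 88; 53; 41; 13; 167; 160; 73; 72; 101; 100; 108; 89; 32; 5; 175; 168; 105; 92; 89; 108; 40; 13; 175; 150; 85; 64; 53; 108]);
  ([:: 0; 1; 52; 88; 89; 109; 108], [:: (53, [:: ], 53); (54, [:: 53], 53)], [:: 0; 1; 52; 53; 88; 89; 108], [:: 49; 21; 173; 147; 84; 65; 93; 92; 109; 89; 33; 5; 167; 160; 104; 92; 89; 109]);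
  ([:: 0; 1; 52; 88; 89; 109; 108; 53], [:: ], [:: 0; 1; 52; 53; 88; 89; 108; 109], [:: 48; 21; 173; 147; 77; 56; 88; 53; 41; 13; 167; 160; 73; 72; 101; 100; 108; 89; 32; 5; 175; 168; 105; 92; 89; 108]);
  ([:: 0; 1; 52; 88; 108], [:: (53, [:: ], 53); (54, [:: 53], 53); (89, [:: ], 89); (90, [:: 89], 89); (109, [:: ], 109); (110, [:: 109], 109)], [:: 0; 1; 52; 53; 88], [:: 175; 150; 77; 57; 105; 92; 108]);
  ([:: 0; 1; 52; 88; 108; 53], [:: (89, [:: ], 89); (90, [:: 89], 89); (109, [:: ], 109); (110, [:: 109], 109)], [:: 0; 1; 52; 53; 88; 89], [:: 29; 28; 159; 152; 52; 104; 92; 109; 53; 29; 28; 57; 56; 93; 92; 108]);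
  ([:: 0; 1; 52; 88; 108; 53; 89], [:: (109, [:: ], 109); (110, [:: 109], 109)], [:: 0; 1; 52; 53; 88; 89; 108], [:: 49; 21; 173; 147; 84; 65; 93; 92; 109; 89; 49; 21; 175; 145; 76; 56; 53; 48; 21; 167; 160; 73; 72; 104; 93; 89]);
  ([:: 0; 1; 52; 88; 108; 53; 89; 109], [:: ], [:: 0; 1; 52; 53; 88; 89; 108; 109], [:: 48; 21; 173; 147; 77; 56; 88; 53; 41; 13; 167; 160; 73; 72; 101; 100; 108; 89; 41; 13; 173; 148; 84; 64; 53; 109]);
  ([:: 0; 1; 52; 88; 108; 53; 109], [:: (89, [:: ], 89); (90, [:: 89], 89)], [:: 0; 1; 52; 53; 88; 89; 108], [:: 49; 21; 173; 147; 84; 65; 93; 92; 109; 89; 49; 21; 175; 145; 76; 56; 53; 29; 28; 57; 56; 93; 92; 108; 109]);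
  ([:: 0; 1; 52; 88; 108; 53; 109; 89], [:: ], [:: 0; 1; 52; 53; 88; 89; 108; 109], [:: 48; 21; 173; 147; 77; 56; 88; 53; 41; 13; 167; 160; 73; 72; 101; 100; 108; 89; 32; 5; 175; 168; 105; 92; 89; 108; 32; 5; 167; 160; 104; 92; 109; 89; 49; 21; 175; 145; 76; 56; 93; 92; 89; 108; 53; 109; 49; 21; 167; 160; 73; 72; 101; 100; 108; 89]);
  ([:: 0; 1; 52; 88; 108; 89], [:: (53, [:: ], 53); (54, [:: 53], 53); (109, [:: ], 109); (110, [:: 109], 109)], [:: 0; 1; 52; 53; 88; 89], [:: 29; 28; 159; 152; 52; 104; 92; 109; 53; 175; 145; 76; 56; 89; 29; 28; 57; 56; 93; 92; 108]);
  ([:: 0; 1; 52; 88; 108; 89; 53], [:: (109, [:: ], 109); (110, [:: 109], 109)], [:: 0; 1; 52; 53; 88; 89; 108], [:: 32; 5; 175; 150; 76; 57; 105; 93; 89]);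
  ([:: 0; 1; 52; 88; 108; 89; 53; 109], [:: ], [:: 0; 1; 52; 53; 88; 89; 108; 109], [:: 48; 21; 173; 147; 77; 56; 88; 53; 40; 13; 175; 150; 85; 64; 108; 53]);
  ([:: 0; 1; 52; 88; 108; 89; 109], [:: (53, [:: ], 53); (54, [:: 53], 53)], [:: 0; 1; 52; 53; 88; 89; 108], [:: 49; 21; 173; 147; 84; 65; 93; 92; 109; 89; 29; 28; 57; 56; 93; 92; 108; 109]);
  ([:: 0; 1; 52; 88; 108; 89; 109; 53], [:: ], [:: 0; 1; 52; 53; 88; 89; 108; 109], [:: 48; 21; 173; 147; 77; 56; 88; 53; 41; 13; 167; 160; 73; 72; 101; 100; 108; 89; 33; 5; 167; 160; 104; 92; 89; 109]);
  ([:: 0; 1; 52; 88; 108; 109], [:: (53, [:: ], 53); (54, [:: 53], 53); (89, [:: ], 89); (90, [:: 89], 89)], [:: 0; 1; 52; 53; 88; 89], [:: 40; 13; 175; 150; 85; 64; 104; 92; 108; 109]);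
  ([:: 0; 1; 52; 88; 108; 109; 53], [:: (89, [:: ], 89); (90, [:: 89], 89)], [:: 0; 1; 52; 53; 88; 89; 108], [:: 40; 13; 175; 150; 85; 64; 104; 92; 108; 109; 53]);
  ([:: 0; 1; 52; 88; 108; 109; 53; 89], [:: ], [:: 0; 1; 52; 53; 88; 89; 108; 109], [:: 40; 13; 175; 150; 85; 64; 104; 92; 108; 109; 53; 89]);
  ([:: 0; 1; 52; 88; 108; 109; 89], [:: (53, [:: ], 53); (54, [:: 53], 53)], [:: 0; 1; 52; 53; 88; 89; 108], [:: 49; 21; 173; 147; 84; 65; 93; 92; 109; 89; 49; 21; 175; 145; 76; 56; 53; 48; 21; 167; 160; 73; 72; 104; 93; 89; 41; 13; 173; 148; 84; 64; 109]);
  ([:: 0; 1; 52; 88; 108; 109; 89; 53], [:: ], [:: 0; 1; 52; 53; 88; 89; 108; 109], [:: 48; 21; 173; 147; 77; 56; 88; 53; 41; 13; 167; 160; 73; 72; 101; 100; 108; 89]);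
  ([:: 0; 1; 52; 88; 109], [:: (53, [:: ], 53); (54, [:: 53], 53); (89, [:: ], 89); (90, [:: 89], 89); (108, [:: ], 108); (111, [:: 108], 108)], [:: 0; 1; 52; 53; 88], [:: 41; 13; 175; 150; 76; 57; 105; 92; 109]);
  ([:: 0; 1; 52; 88; 109; 53], [:: (89, [:: ], 89); (90, [:: 89], 89); (108, [:: ], 108); (111, [:: 108], 108)], [:: 0; 1; 52; 53; 88; 89], [:: 29; 28; 159; 152; 52; 104; 92; 109; 53]);
  ([:: 0; 1; 52; 88; 109; 53; 89], [:: (108, [:: ], 108); (111, [:: 108], 108)], [:: 0; 1; 52; 53; 88; 89; 108], [:: 49; 21; 173; 147; 84; 65; 93; 92; 109; 89; 49; 21; 175; 145; 76; 56; 53; 32; 5; 175; 168; 105; 92; 89]);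
  ([:: 0; 1; 52; 88; 109; 53; 89; 108], [:: ], [:: 0; 1; 52; 53; 88; 89; 108; 109], [:: 48; 21; 173; 147; 77; 56; 88; 53; 41; 13; 167; 160; 73; 72; 101; 100; 108; 89; 32; 5; 175; 168; 105; 92; 89; 108; 49; 21; 167; 160; 76; 56; 104; 93; 109; 89; 53; 108; 49; 21; 175; 145; 76; 56; 53; 89]);
  ([:: 0; 1; 52; 88; 109; 53; 108], [:: (89, [:: ], 89); (90, [:: 89], 89)], [:: 0; 1; 52; 53; 88; 89; 108], [:: 49; 21; 173; 147; 84; 65; 93; 92; 109; 89; 49; 21; 175; 145; 76; 56; 53]);
  ([:: 0; 1; 52; 88; 109; 53; 108; 89], [:: ], [:: 0; 1; 52; 53; 88; 89; 108; 109], [:: 48; 21; 173; 147; 77; 56; 88; 53; 41; 13; 167; 160; 73; 72; 101; 100; 108; 89; 32; 5; 175; 168; 105; 92; 89; 108; 33; 5; 175; 150; 76; 57; 93; 92; 109; 89]);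
  ([:: 0; 1; 52; 88; 109; 89], [:: (53, [:: ], 53); (54, [:: 53], 53); (108, [:: ], 108); (111, [:: 108], 108)], [:: 0; 1; 52; 53; 88; 89], [:: 29; 28; 159; 152; 52; 104; 92; 109; 53; 175; 145; 76; 56; 89]);
  ([:: 0; 1; 52; 88; 109; 89; 53], [:: (108, [:: ], 108); (111, [:: 108], 108)], [:: 0; 1; 52; 53; 88; 89; 108], [:: 49; 21; 173; 147; 84; 65; 93; 92; 109; 89; 40; 13; 175; 150; 85; 64; 53]);
  ([:: 0; 1; 52; 88; 109; 89; 53; 108], [:: ], [:: 0; 1; 52; 53; 88; 89; 108; 109], [:: 48; 21; 173; 147; 77; 56; 88; 53; 41; 13; 167; 160; 73; 72; 101; 100; 108; 89; 32; 5; 175; 168; 105; 92; 89; 108; 49; 21; 167; 160; 76; 56; 104; 93; 109; 89; 53; 108]);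
  ([:: 0; 1; 52; 88; 109; 89; 108], [:: (53, [:: ], 53); (54, [:: 53], 53)], [:: 0; 1; 52; 53; 88; 89; 108], [:: 49; 21; 173; 147; 84; 65; 93; 92; 109; 89]);
  ([:: 0; 1; 52; 88; 109; 89; 108; 53], [:: ], [:: 0; 1; 52; 53; 88; 89; 108; 109], [:: 48; 21; 173; 147; 77; 56; 88; 53; 41; 13; 173; 148; 84; 64; 109; 53]);
  ([:: 0; 1; 52; 88; 109; 108], [:: (53, [:: ], 53); (54, [:: 53], 53); (89, [:: ], 89); (90, [:: 89], 89)], [:: 0; 1; 52; 53; 88; 89], [:: 41; 13; 173; 148; 84; 64; 105; 92; 109; 108]);
  ([:: 0; 1; 52; 88; 109; 108; 53], [:: (89, [:: ], 89); (90, [:: 89], 89)], [:: 0; 1; 52; 53; 88; 89; 108], [:: 29; 28; 159; 152; 52; 104; 92; 109; 53]);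
  ([:: 0; 1; 52; 88; 109; 108; 53; 89], [:: ], [:: 0; 1; 52; 53; 88; 89; 108; 109], [:: 48; 21; 173; 147; 77; 56; 88; 53; 29; 28; 159; 152; 84; 64; 105; 93; 108; 53]);
  ([:: 0; 1; 52; 88; 109; 108; 89], [:: (53, [:: ], 53); (54, [:: 53], 53)], [:: 0; 1; 52; 53; 88; 89; 108], [:: 41; 13; 173; 148; 84; 64; 105; 92; 109; 108; 89]);
  ([:: 0; 1; 52; 88; 109; 108; 89; 53], [:: ], [:: 0; 1; 52; 53; 88; 89; 108; 109], [:: 41; 13; 173; 148; 84; 64; 105; 92; 109; 108; 89; 53])].
Definition mkv (f : nat -> int) : seq int := [seq f k | k <- iota 0 8].
Definition dotZ (a b : seq int) : int := foldr (fun k s => nth 0 a k * nth 0 b k + s) 0 (iota 0 8).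
Definition qZ (a b : seq int) : int := ((2 * dotZ b a) %/ dotZ a a)%Z.
Definition rZ (a b : seq int) : seq int := mkv (fun k => nth 0 b k - qZ a b * nth 0 a k).
Definition getroot n := nth [::] rootsL n.
Definition rwZ (w : seq nat) (x : seq int) := foldr (fun n y => rZ (getroot n) y) x w.
Definition eqi (x y : int) : bool := match x, y with Posz m, Posz n => eqn m n | Negz m, Negz n => eqn m n | _, _ => false end.
Fixpoint eqil (a b : seq int) := match a,b with [::],[::] => true | x::a', y::b' => eqi x y && eqil a' b' | _,_ => false end.
Definition memZ z l := has (eqil z) l.
Definition pairOK (a b : seq int) := (dotZ a a * qZ a b == 2 * dotZ b a) && memZ (rZ a b) rootsL.
Definition chkRoots := (size rootsL == 240) && all (fun a => (size a == 8) && (dotZ a a == 32)) rootsL.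
Definition chkPairs := all (fun a => all (pairOK a) rootsL) rootsL.
Definition code1 (i j : nat) (a b : bool) := mkv (fun k => (if k == i then (if a then n4 else p4) else z0) + (if k == j then (if b then n4 else p4) else z0)).
Definition code2 (bs : seq bool) := mkv (fun k => if nth false bs k then n2 else p2).
Fixpoint blists n : seq (seq bool) := if n is n'.+1 then [seq b :: l | b <- [:: true; false], l <- blists n'] else [:: [::]].
Definition bools := [:: true; false].
Definition chkC1 := all (fun i => all (fun j => all (fun a => all (fun b => (i != j) ==> memZ (code1 i j a b) rootsL) bools) bools) (iota 0 8)) (iota 0 8).
Definition chkC2 := all (fun bs => ~~ odd (count id bs) ==> memZ (code2 bs) rootsL) (blists 8).
Definition isType1 z := has (fun i => has (fun j => has (fun a => has (fun b => (i != j) && eqil z (code1 i j a b)) bools) bools) (iota 0 8)) (iota 0 8).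
Definition isType2 z := has (fun bs => ~~ odd (count id bs) && eqil z (code2 bs)) (blists 8).
Definition chkC3 := all (fun z => isType1 z || isType2 z) rootsL.

Definition nodeKeys := map (fun nd : seq nat * seq (nat * seq nat * nat) * seq nat * seq nat => nd.1.1.1) nodesD.
Definition getNode p := nth ([::],[::],[::],[::]) nodesD (index p nodeKeys).
Definition lookupT (tab : seq (nat * seq nat * nat)) n := nth (0,[::],0) tab (index n (map (fun e => e.1.1) tab)).
Definition orthP (p : seq nat) n := all (fun i => dotZ (getroot n) (getroot i) == 0) p.
Definition startsList : seq (seq nat) := [:: [::]; [:: 0]; [:: 0; 1]; [:: 0; 1; 52]; [:: 0; 1; 52; 53]; [:: 0; 1; 52; 88];
  [:: 0; 1; 52; 53; 88]; [:: 0; 1; 52; 53; 88; 89]; [:: 0; 1; 52; 53; 88; 89; 108]; [:: 0; 1; 52; 53; 88; 89; 108; 109]].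
Definition startsOf k := [seq t <- startsList | size t == k].
Definition ltn240 (i : nat) := (i < 240)%N.
Definition entryOK (p : seq nat) (e : nat * seq nat * nat) :=
  [&& all ltn240 e.1.2, ltn240 e.2,
      map (rwZ e.1.2) (map getroot p) == map getroot p,
      rwZ e.1.2 (getroot e.1.1) == getroot e.2 & rcons p e.2 \in nodeKeys].
Definition nodeOK (nd : seq nat * seq (nat * seq nat * nat) * seq nat * seq nat) :=
  let: (p, tab, t, lw) := nd in
  [&& all ltn240 p, all (fun n => orthP p n ==> ((lookupT tab n).1.1 == n) && entryOK p (lookupT tab n)) (iota 0 240),
      all ltn240 lw, perm_eq (map (rwZ lw) (map getroot p)) (map getroot t) & t \in startsOf (size p)].
Definition chkNodes := ([::] \in nodeKeys) && all nodeOK nodesD.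

Definition addv (a b : seq int) := mkv (fun k => nth 0 a k + nth 0 b k).
Definition subv (a b : seq int) := mkv (fun k => nth 0 a k - nth 0 b k).
Definition chkSO (L : seq nat) := [&& all ltn240 L, uniq (map getroot L) &
  all (fun i => all (fun j => (i != j) ==> [&& dotZ (getroot i) (getroot j) == 0,
     ~~ memZ (addv (getroot i) (getroot j)) rootsL & ~~ memZ (subv (getroot i) (getroot j)) rootsL]) L) L].
Definition tD : seq nat := [:: 0; 1; 52; 53].
Definition tA : seq nat := [:: 0; 1; 52; 88].
Definition halfOK (a c : seq int) := all (fun k => 2 * nth 0 c k == nth 0 a k) (iota 0 8).
Definition reflOK (a b c : seq int) := all (fun k => dotZ a a * nth 0 c k == dotZ a a * nth 0 b k - 2 * dotZ b a * nth 0 a k) (iota 0 8) && (dotZ a a != 0).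
Definition pairChk (a b c d r1 r2 : nat) :=
  let u := subv (getroot a) (getroot b) in let v := subv (getroot c) (getroot d) in
  [&& dotZ u v == 0, dotZ u u == dotZ v v, dotZ u u != 0, ltn240 r1, ltn240 r2,
      halfOK (addv u v) (getroot r1) & halfOK (subv u v) (getroot r2)].
Definition yA : seq int := [:: p4; z0; p2; n2; p2; p2; z0; z0].
Definition chkK4 := [&& chkSO tD, chkSO tA, pairChk 0 1 52 53 32 33, pairChk 0 52 1 53 5 33,
  pairChk 0 53 1 52 5 32, reflOK (subv (getroot 52) (getroot 88)) (getroot 4) yA,
  reflOK (subv (getroot 0) (getroot 1)) yA yA & ~~ memZ yA rootsL].
Definition startsOf4 := startsOf 4 == [:: tD; tA].
Lemma chkRootsT : chkRoots. Proof. vm_compute. reflexivity. Qed.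
Lemma chkPairsT : chkPairs. Proof. vm_compute. reflexivity. Qed.
Lemma chkC1T : chkC1. Proof. vm_compute. reflexivity. Qed.
Lemma chkC2T : chkC2. Proof. vm_compute. reflexivity. Qed.
Lemma chkC3T : chkC3. Proof. vm_compute. reflexivity. Qed.
Lemma chkNodesT : chkNodes. Proof. vm_compute. reflexivity. Qed.
Lemma chkK4T : chkK4. Proof. vm_compute. reflexivity. Qed.
Lemma startsOf4T : startsOf4. Proof. vm_compute. reflexivity. Qed.


Lemma eqiP x y : eqi x y = (x == y).
Proof. by case: x => m; case: y => n //=; apply/eqnP/eqP => [->|[]]. Qed.
Lemma eqilP a b : eqil a b = (a == b).
Proof.
elim: a b => [|x a IH] [|y b] //=.
by rewrite eqiP IH eqseq_cons.
Qed.
Lemma memZP z l : memZ z l = (z \in l).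
Proof.
rewrite /memZ; elim: l => [|y l IH] //=; by rewrite IH eqilP inE eq_sym.
Qed.
Lemma nth_mkv f k : (k < 8)%N -> nth 0 (mkv f) k = f k.
Proof. by move=> hk; rewrite /mkv (nth_map 0) ?size_iota // nth_iota. Qed.
Lemma size_mkv f : size (mkv f) = 8%N.
Proof. by rewrite /mkv size_map size_iota. Qed.

Section Emb.
Variable R : realFieldType.
Definition emb (z : seq int) : vec R := \row_(k < 8) ((nth 0 z k)%:~R / 4).
Lemma emb_mkv f : emb (mkv f) = \row_(k < 8) ((f k)%:~R / 4).
Proof. by apply/rowP => k; rewrite !mxE nth_mkv. Qed.
Lemma dotp_emb a b : dotp (emb a) (emb b) = (dotZ a b)%:~R / 16.
Proof.
rewrite /dotp /dotZ /= !big_ord_recl big_ord0 !mxE /=.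
rewrite !(intrD, intrM).
by field.
Qed.
End Emb.


Section Emb2.
Variable R : realFieldType.
Local Notation emb := (@emb R).
Lemma four_nz : (4 : R) != 0. Proof. by rewrite pnatr_eq0. Qed.
Lemma emb_inj a b : size a = 8%N -> size b = 8%N -> emb a = emb b -> a = b.
Proof.
move=> ha hb e; apply: (eq_from_nth (x0:=0)); rewrite ?ha ?hb // => k hk.
have := congr1 (fun m : vec R => m 0 (Ordinal hk)) e; rewrite !mxE /=.
move/(congr1 (fun t => t * 4)); rewrite !divfK ?four_nz //.
exact: intr_inj.
Qed.
Lemma embB a b : emb a - emb b = emb (mkv (fun k => nth 0 a k - nth 0 b k)).
Proof. by rewrite emb_mkv; apply/rowP => k; rewrite !mxE intrB mulrBl. Qed.
Lemma embD a b : emb a + emb b = emb (mkv (fun k => nth 0 a k + nth 0 b k)).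
Proof. by rewrite emb_mkv; apply/rowP => k; rewrite !mxE intrD mulrDl. Qed.
Lemma emb_half a c : (forall k, (k < 8)%N -> 2 * nth 0 c k = nth 0 a k) -> (1/2) *: emb a = emb c.
Proof.
move=> h; apply/rowP => k; rewrite !mxE -(h k (ltn_ord k)) intrM.
have -> : ((2 : int)%:~R : R) = 2 by [].
by field.
Qed.
Lemma reflQ a b c : dotZ a a != 0 ->
  (forall k, (k < 8)%N -> dotZ a a * nth 0 c k = dotZ a a * nth 0 b k - 2 * dotZ b a * nth 0 a k) ->
  refl (emb a) (emb b) = emb c.
Proof.
move=> hD h; rewrite reflE /cf !dotp_emb; apply/rowP => k; rewrite !mxE.
have hDR : ((dotZ a a)%:~R : R) != 0 by rewrite intr_eq0.
have := congr1 (fun t : int => (t%:~R : R)) (h k (ltn_ord k)).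
rewrite !(intrM, intrB) => e.
rewrite -[X in _ = X / 4](mulKf hDR) e.
have -> : ((2 : int)%:~R : R) = 2 by [].
move: hDR; move: ((dotZ a a)%:~R : R) => D hD'.
by field.
Qed.
End Emb2.


Lemma root_size z : z \in rootsL -> size z = 8%N.
Proof. by move=> hz; move: chkRootsT => /andP[_ /allP/(_ z hz)/andP[/eqP -> _]]. Qed.
Lemma root_dot z : z \in rootsL -> dotZ z z = 32.
Proof. by move=> hz; move: chkRootsT => /andP[_ /allP/(_ z hz)/andP[_ /eqP ->]]. Qed.
Lemma getroot_mem n : (n < 240)%N -> getroot n \in rootsL.
Proof. by move=> h; rewrite /getroot mem_nth //; move: chkRootsT => /andP[/eqP -> _]. Qed.
Lemma blists_size n bs : bs \in blists n -> size bs = n.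
Proof.
elim: n bs => [|n IH] bs; first by rewrite /= inE => /eqP ->.
move=> /allpairsPdep [b [l [_ hl ->]]] /=; by rewrite (IH _ hl).
Qed.
Lemma blists_mem n bs : size bs = n -> bs \in blists n.
Proof.
elim: n bs => [|n IH] [|b l] // h.
apply/allpairsPdep; exists b, l; split => //; last by apply: IH; case: h.
by case: (b).
Qed.
Lemma card_count (f : 'I_8 -> bool) : #|[set k | f k]| = count id [seq f (inord k) | k <- iota 0 8].
Proof.
have -> : #|[set k | f k]| = #|[pred k | f k]| by apply: eq_card => k; rewrite inE.
rewrite cardE /enum_mem size_filter -enumT -val_enum_ord -map_comp count_map.
by apply: eq_count => k /=; rewrite inord_val.
Qed.

Section RootE.
Variable R : realFieldType.
Local Notation emb := (@emb R).
Lemma n4R : (n4%:~R : R) = -4. Proof. by rewrite /n4 NegzE intrN. Qed.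
Lemma p4R : (p4%:~R : R) = 4. Proof. by []. Qed.
Lemma n2R : (n2%:~R : R) = -2. Proof. by rewrite /n2 NegzE intrN. Qed.
Lemma p2R : (p2%:~R : R) = 2. Proof. by []. Qed.
Lemma z0R : (z0%:~R : R) = 0. Proof. by []. Qed.

Lemma code1E (i j : 'I_8) (a b : bool) : i != j ->
  emb (code1 i j a b) = (-1) ^+ a *: ev R i + (-1) ^+ b *: ev R j.
Proof.
move=> hij; rewrite /code1 emb_mkv; apply/rowP => k; rewrite !mxE /=.
have F (x : 'I_8) : x <> k -> ((k == x) = false) * ((k == x :> nat) = false) * ((x == k) = false).
  by move=> h; split; [split|]; apply/eqP => e; apply: h; [by rewrite e| apply: val_inj => /=; by rewrite e | by rewrite e].
have [eik|nik] := eqP (x := i) (y := k); have [ejk|njk] := eqP (x := j) (y := k).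
- by move: hij; rewrite eik ejk eqxx.
- subst k; rewrite !(F j njk) !eqxx.
  by case: a; case: b; rewrite /= ?intrD ?n4R ?p4R ?z0R ?expr0 ?expr1; lra.
- subst k; rewrite !(F i nik) !eqxx.
  by case: a; case: b; rewrite /= ?intrD ?n4R ?p4R ?z0R ?expr0 ?expr1; lra.
- rewrite !(F i nik) !(F j njk).
  by case: a; case: b; rewrite /= ?intrD ?n4R ?p4R ?z0R ?expr0 ?expr1; lra.
Qed.

Lemma code2E (f : {ffun 'I_8 -> bool}) :
  emb (code2 [seq f (inord k) | k <- iota 0 8]) = \row_(k < 8) ((-1) ^+ (f k) / 2).
Proof.
rewrite /code2 emb_mkv; apply/rowP => k; rewrite !mxE (nth_map 0) ?size_iota // nth_iota // add0n inord_val.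
by case: (f k); rewrite ?n2R ?p2R ?expr0 ?expr1; lra.
Qed.
End RootE.


Section Roots.
Variable R : realFieldType.
Local Notation emb := (@emb R).
Definition E n : vec R := emb (getroot n).

Lemma rootE x : isE8root x <-> exists2 z, z \in rootsL & x = emb z.
Proof.
split.
- case=> [[i [j [a [b [hij ->]]]]] | [f [hf ->]]].
  + exists (code1 i j a b); last by rewrite code1E.
    move: chkC1T => /allP/(_ i); rewrite mem_iota ltn_ord => /(_ isT) /allP/(_ j).
    have ha : a \in bools by case: (a).
    have hb : b \in bools by case: (b).
    rewrite mem_iota ltn_ord => /(_ isT) /allP/(_ a ha) /allP/(_ b hb).
    by move=> /implyP/(_ hij); rewrite memZP.
  + exists (code2 [seq f (inord k) | k <- iota 0 8]); last by rewrite code2E.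
    have hs : size [seq f (inord k) | k <- iota 0 8] = 8%N by rewrite size_map size_iota.
    move: chkC2T => /allP/(_ _ (blists_mem hs)) /implyP.
    by rewrite -card_count hf memZP => /(_ isT).
- case=> z hz ->; move: chkC3T => /allP/(_ z hz) /orP [].
  + case/hasP => i; rewrite mem_iota => /andP[_ hi] /hasP [j]; rewrite mem_iota => /andP [_ hj].
    case/hasP => a _ /hasP [b _] /andP [hij]; rewrite eqilP => /eqP ->.
    left; exists (Ordinal hi), (Ordinal hj), a, b; split; first by [].
    by rewrite (@code1E R (Ordinal hi) (Ordinal hj)).
  + case/hasP => bs hbs /andP [hev]; rewrite eqilP => /eqP ->.
    right; pose f := [ffun k : 'I_8 => nth false bs k].
    have hs := blists_size hbs.
    have Ebs : [seq f (inord k) | k <- iota 0 8] = bs.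
      apply: (eq_from_nth (x0:=false)); rewrite size_map size_iota ?hs // => k hk.
      by rewrite (nth_map 0) ?size_iota // nth_iota // ffunE inordK.
    exists f; split; first by rewrite card_count Ebs.
    by rewrite -code2E Ebs.
Qed.

Lemma E_root n : (n < 240)%N -> isE8root (E n).
Proof. move=> h; apply/rootE; exists (getroot n) => //; exact: getroot_mem. Qed.

Lemma root_nz (a : vec R) : isE8root a -> dotp a a != 0.
Proof.
case/rootE => z hz ->; rewrite dotp_emb root_dot //.
have -> : ((32 : int)%:~R : R) = 32 by [].
by rewrite mulf_neq0 ?invr_eq0 ?pnatr_eq0.
Qed.

Lemma roots_nz (s : seq (vec R)) : (forall a, a \in s -> isE8root a) -> nz s.
Proof. by move=> h a ha; apply: root_nz; apply: h. Qed.

Lemma refl_emb a b : a \in rootsL -> b \in rootsL ->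
  refl (emb a) (emb b) = emb (rZ a b) /\ rZ a b \in rootsL.
Proof.
move=> ha hb; move: chkPairsT => /allP/(_ a ha) /allP/(_ b hb) /andP [/eqP hq]; rewrite memZP => hm.
split=> //; apply: reflQ; first by rewrite root_dot.
by move=> k hk; rewrite /rZ nth_mkv // mulrBr mulrA hq.
Qed.

Lemma refl_root (a x : vec R) : isE8root a -> isE8root x -> isE8root (refl a x).
Proof.
case/rootE => za ha ->; case/rootE => zx hx ->.
by have [-> h] := refl_emb ha hx; apply/rootE; exists (rZ za zx).
Qed.

Lemma rw_root (s : seq (vec R)) (x : vec R) : (forall a, a \in s -> isE8root a) -> isE8root x -> isE8root (reflword s x).
Proof.
elim: s => [//|a s IH] hs hx /=.
apply: refl_root; first by apply: hs; rewrite inE eqxx.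
by apply: IH => // b hb; apply: hs; rewrite inE hb orbT.
Qed.

Lemma rw_emb w z : all ltn240 w -> z \in rootsL ->
  reflword (map E w) (emb z) = emb (rwZ w z) /\ rwZ w z \in rootsL.
Proof.
elim: w => [|n w IH] /=; first by [].
case/andP => hn hw hz; have [e1 e2] := IH hw hz.
rewrite e1; exact: refl_emb (getroot_mem hn) e2.
Qed.

Lemma Ew_roots w : all ltn240 w -> forall a : vec R, a \in map E w -> isE8root a.
Proof. by move=> /allP h a /mapP [n hn ->]; apply: E_root; apply: h. Qed.
End Roots.


Lemma size_rootsL : size rootsL = 240%N.
Proof. by move: chkRootsT => /andP [/eqP]. Qed.

Section W.
Variable R : realFieldType.
Local Notation emb := (@emb R).
Local Notation E := (@E R).
Implicit Types S T U : seq (vec R).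

Lemma inWeyl_ext (g g' : vec R -> vec R) : (forall x, g x = g' x) -> inWeyl g -> inWeyl g'.
Proof. by move=> H [s [hs hw]]; exists s; split=> // x; rewrite -H hw. Qed.

Lemma roots_rev (s : seq (vec R)) : (forall a, a \in s -> isE8root a) -> forall a, a \in rev s -> isE8root a.
Proof. by move=> h a; rewrite mem_rev; apply: h. Qed.
Lemma roots_cat (s1 s2 : seq (vec R)) : (forall a, a \in s1 -> isE8root a) -> (forall a, a \in s2 -> isE8root a) ->
  forall a, a \in s1 ++ s2 -> isE8root a.
Proof. by move=> h1 h2 a; rewrite mem_cat => /orP [/h1|/h2]. Qed.

Lemma Wconj_sym S T : Wconj S T -> Wconj T S.
Proof.
case=> w [[s [hs hw]] hp].
exists (reflword (rev s)); split; first by exists (rev s); split => //; apply: roots_rev.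
have -> : S = map (reflword (rev s)) (map w S).
  rewrite -map_comp -[LHS]map_id; apply: eq_map => x /=.
  rewrite hw rw_inv //; exact: roots_nz.
by apply: perm_map; rewrite perm_sym.
Qed.

Lemma Wconj_trans S T U : Wconj S T -> Wconj T U -> Wconj S U.
Proof.
case=> w1 [[s1 [hs1 hw1]] hp1]; case=> w2 [[s2 [hs2 hw2]] hp2].
exists (reflword (s2 ++ s1)); split; first by exists (s2 ++ s1); split => //; apply: roots_cat.
have -> : map (reflword (s2 ++ s1)) S = map w2 (map w1 S).
  by rewrite -map_comp; apply: eq_map => x /=; rewrite rw_cat hw1 hw2.
exact: perm_trans (perm_map w2 hp1) hp2.
Qed.

Lemma rw_inj (s : seq (vec R)) : nz s -> injective (reflword s).
Proof. by move=> h; exact: (can_inj (fun x => @rw_inv R s x h)). Qed.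

Lemma map_fix (f : vec R -> vec R) L : map f L = L -> forall x, x \in L -> f x = x.
Proof.
elim: L => [//|y L IH] /= [e1 e2] x; rewrite inE => /orP [/eqP ->|hx] //.
exact: IH.
Qed.

Lemma rw_map w L : all ltn240 w -> all (fun z => z \in rootsL) L ->
  map (reflword (map E w)) (map emb L) = map emb (map (rwZ w) L).
Proof.
move=> hw; elim: L => [//|z L IH] /= /andP [hz hL].
by rewrite IH // (rw_emb R hw hz).1.
Qed.

Lemma mapE p : map E p = map emb (map getroot p).
Proof. by rewrite -map_comp. Qed.

Lemma roots_of p : all ltn240 p -> all (fun z => z \in rootsL) (map getroot p).
Proof. by move=> /allP h; apply/allP => z /mapP [i hi ->]; apply: getroot_mem; apply: h. Qed.

Lemma node_of p : p \in nodeKeys -> exists tab t lw, (p, tab, t, lw) \in nodesD.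
Proof.
move=> hp.
have hi : (index p nodeKeys < size nodesD)%N by rewrite -(size_map (fun nd : seq nat * seq (nat * seq nat * nat) * seq nat * seq nat => nd.1.1.1)) index_mem.
have := nth_index [::] hp; rewrite /nodeKeys (nth_map ([::],[::],[::],[::])) //.
have := mem_nth ([::],[::],[::],[::]) hi.
case: (nth _ nodesD _) => [[[p' tab] t] lw] /= hm ep.
by exists tab, t, lw; rewrite -ep.
Qed.

Lemma nodeOK_of p tab t lw : (p, tab, t, lw) \in nodesD ->
  [/\ all ltn240 p, all (fun n => orthP p n ==> ((lookupT tab n).1.1 == n) && entryOK p (lookupT tab n)) (iota 0 240),
     all ltn240 lw, perm_eq (map (rwZ lw) (map getroot p)) (map getroot t) & t \in startsOf (size p)].
Proof. by move=> h; move: chkNodesT => /andP [_ /allP /(_ _ h)] /and5P [? ? ? ? ?]; split. Qed.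

Lemma dotZ0 a b : dotp (emb a) (emb b) = 0 -> dotZ a b = 0.
Proof.
rewrite dotp_emb => /eqP; rewrite mulf_eq0 invr_eq0 pnatr_eq0 orbF intr_eq0.
by move/eqP.
Qed.

Lemma red_n n : forall (M : seq (vec R)), size M = n -> forall p, p \in nodeKeys ->
  (forall a, a \in M -> isE8root a) ->
  (forall a b, a \in M -> b \in M -> a != b -> dotp a b = 0) -> uniq M ->
  (forall a i, a \in M -> i \in p -> dotp a (E i) = 0) ->
  exists w q, [/\ all ltn240 w, q \in nodeKeys & map (reflword (map E w)) (map E p ++ M) = map E q].
Proof.
elim: n => [|n IH] [|r M] //= hs p hp hr ho hu hp0.
  exists [::], p; split => //; rewrite cats0; by elim: (map E p) => //= x l ->.
have /rootE [z hz er] := hr r (mem_head r M).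
pose n0 := index z rootsL.
have hn : (n0 < 240)%N by rewrite -size_rootsL index_mem.
have gz : getroot n0 = z by rewrite /getroot nth_index.
have [tab [t [lw hnd]]] := node_of hp.
have [hpl hall _ _ _] := nodeOK_of hnd.
have horth : orthP p n0.
  apply/allP => i hi; apply/eqP; apply: dotZ0; rewrite gz -er.
  exact: (hp0 r i (mem_head r M) hi).
move: hall => /allP/(_ n0); rewrite mem_iota add0n hn => /(_ isT) /implyP/(_ horth).
case: (lookupT tab n0) => [[m w1] rho] /= /andP [/eqP em].
case/and5P; rewrite /= => hw1 hrho /eqP hfix /eqP himg hkey.
pose f := reflword (map E w1).
have hrs := @Ew_roots R w1 hw1.
have hnz : nz (map E w1) := roots_nz hrs.
have ffix : map f (map E p) = map E p by rewrite /f [map E p]mapE rw_map ?roots_of // hfix.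
have fr : f r = E rho.
  by rewrite er /f -gz (rw_emb R hw1 (getroot_mem hn)).1 -em himg.
have hu' := hu; move: hu' => /= /andP [hrM huM].
have huM' : uniq (map f M) by rewrite map_inj_uniq //; exact: rw_inj.
have hs' : size (map f M) = n by rewrite size_map; case: hs.
have hr' : forall a, a \in map f M -> isE8root a.
  move=> a ha; case/mapP: ha => a' ha' ->; apply: rw_root => //.
  by apply: hr; rewrite inE ha' orbT.
have ho' : forall a b, a \in map f M -> b \in map f M -> a != b -> dotp a b = 0.
  move=> a b ha hb hab; case/mapP: ha => a' ha' ea; case/mapP: hb => b' hb' eb.
  rewrite ea eb rw_iso //; apply: ho; rewrite ?inE ?ha' ?hb' ?orbT //.
  by apply: contra_neq hab => e'; rewrite ea eb e'.
have hp0' : forall a i, a \in map f M -> i \in rcons p rho -> dotp a (E i) = 0.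
  move=> a i ha hi; case/mapP: ha => a' ha' ->.
  rewrite mem_rcons inE in hi; case/orP: hi => [/eqP ->|hi].
    rewrite -fr rw_iso //; apply: ho; rewrite ?inE ?ha' ?eqxx ?orbT //.
    by apply: contraNneq hrM => <-.
  have hEi : E i \in map E p by apply: map_f.
  rewrite -(map_fix ffix hEi) rw_iso //; apply: hp0 => //.
  by rewrite inE ha' orbT.
have [w2 [q [hw2 hq e]]] := IH (map f M) hs' (rcons p rho) hkey hr' ho' huM' hp0'.
exists (w2 ++ w1), q; split => //; first by rewrite all_cat hw2 hw1.
have step1 : map (reflword (map E (w2 ++ w1))) (map E p ++ r :: M) = map (reflword (map E w2)) (map f (map E p ++ r :: M)).
  by rewrite -map_comp; apply: eq_map => x /=; rewrite map_cat rw_cat.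
by rewrite step1 -e map_cat /= ffix fr map_rcons -cats1 -catA.
Qed.
End W.


Lemma starts_uniq k t t' : (k <= 8)%N -> k != 4%N -> t \in startsOf k -> t' \in startsOf k -> t = t'.
Proof.
move: t t'; case: k => [|[|[|[|[|[|[|[|[|k]]]]]]]]] //= t t' _ _; rewrite /startsOf /= !inE => /eqP -> /eqP -> //.
Qed.

Section C.
Variable R : realFieldType.
Local Notation emb := (@emb R).
Local Notation E := (@E R).

Lemma classify k (S : seq (vec R)) : SOset k S -> exists2 t, t \in startsOf k & Wconj S (map E t).
Proof.
case=> hu [hk [hr ho]].
have h0 : [::] \in nodeKeys by move: chkNodesT => /andP [].
have hp0 : forall a i, a \in S -> i \in [::] -> dotp a (E i) = 0 by [].
have ho' : forall a b, a \in S -> b \in S -> a != b -> dotp a b = 0.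
  by move=> a b ha hb hab; have [_ [h _]] := ho a b ha hb hab.
have [w [q [hw hq e]]] := @red_n R _ S (erefl _) [::] h0 hr ho' hu hp0.
rewrite /= in e.
have [tab [t [lw hnd]]] := node_of hq.
have [hql _ hlw hperm hst] := nodeOK_of hnd.
have hsq : size q = k by rewrite -hk -(size_map E q) -e size_map.
exists t; first by rewrite -hsq.
exists (reflword (map E (lw ++ w))); split.
  by exists (map E (lw ++ w)); split => //; apply: Ew_roots; rewrite all_cat hlw hw.
have -> : map (reflword (map E (lw ++ w))) S = map (reflword (map E lw)) (map E q).
  by rewrite -e -map_comp; apply: eq_map => x /=; rewrite map_cat rw_cat.
rewrite [map E q]mapE rw_map ?roots_of // [map E t]mapE.
exact: perm_map.
Qed.

Inductive PW (a b c d : vec R) : Prop := PWI of inWeyl (refl (a - b) \o refl (c - d)).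
Definition Q (S : seq (vec R)) := forall a b c d, a \in S -> b \in S -> c \in S -> d \in S ->
  uniq [:: a; b; c; d] -> PW a b c d.

Lemma PW1 (a b c d : vec R) : PW a b c d -> PW b a c d.
Proof. by case=> H; constructor; move: H; apply: inWeyl_ext => x /=; rewrite -[b - a]opprB refl_opp. Qed.
Lemma PW2 (a b c d : vec R) : PW a b c d -> PW a b d c.
Proof. by case=> H; constructor; move: H; apply: inWeyl_ext => x /=; rewrite -[d - c]opprB refl_opp. Qed.
Lemma PW3 (a b c d : vec R) : dotp (a - b) (c - d) = 0 -> PW a b c d -> PW c d a b.
Proof. by move=> h [H]; constructor; move: H; apply: inWeyl_ext => x /=; rewrite refl_comm. Qed.
Lemma cross0 (a b c d : vec R) : dotp a c = 0 -> dotp a d = 0 -> dotp b c = 0 -> dotp b d = 0 ->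
  dotp (a - b) (c - d) = 0.
Proof. by move=> h1 h2 h3 h4; rewrite !(dotpBl, dotpBr) h1 h2 h3 h4 !subrr. Qed.
Lemma PW8 (x y z t : vec R) : dotp x z = 0 -> dotp x t = 0 -> dotp y z = 0 -> dotp y t = 0 -> PW x y z t ->
  [/\ PW y x z t, PW x y t z & PW y x t z] /\ [/\ PW z t x y, PW t z x y, PW z t y x & PW t z y x].
Proof.
move=> h1 h2 h3 h4 H.
have H1 := PW1 H; have H2 := PW2 H; have H3 := PW2 H1.
split; split => //; apply: PW3 => //; apply: cross0 => //.
Qed.

Lemma K4Q (S : seq (vec R)) : SOset 4 S -> (K4_in_W_seq S <-> Q S).
Proof.
case=> hu [hs [hr ho]].
case: S hu hs hr ho => [|s0 [|s1 [|s2 [|s3 [|]]]]] // hu _ hr ho.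
have o x y : x \in [:: s0; s1; s2; s3] -> y \in [:: s0; s1; s2; s3] -> x != y -> dotp x y = 0.
  by move=> hx hy hxy; have [_ [h _]] := ho x y hx hy hxy.
move: (hu) => /= /and4P []; rewrite !inE !negb_or => /and3P [d01 d02 d03] /andP [d12 d13] d23 _.
have m0 : s0 \in [:: s0; s1; s2; s3] by rewrite !inE eqxx.
have m1 : s1 \in [:: s0; s1; s2; s3] by rewrite !inE eqxx ?orbT.
have m2 : s2 \in [:: s0; s1; s2; s3] by rewrite !inE eqxx ?orbT.
have m3 : s3 \in [:: s0; s1; s2; s3] by rewrite !inE eqxx ?orbT.
have o01 := o _ _ m0 m1 d01; have o02 := o _ _ m0 m2 d02; have o03 := o _ _ m0 m3 d03.
have o12 := o _ _ m1 m2 d12; have o13 := o _ _ m1 m3 d13; have o23 := o _ _ m2 m3 d23.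
have o10 : dotp s1 s0 = 0 by rewrite dotpC.
have o20 : dotp s2 s0 = 0 by rewrite dotpC.
have o30 : dotp s3 s0 = 0 by rewrite dotpC.
have o21 : dotp s2 s1 = 0 by rewrite dotpC.
have o31 : dotp s3 s1 = 0 by rewrite dotpC.
have o32 : dotp s3 s2 = 0 by rewrite dotpC.
split.
- case=> H1 [H2 H3].
  have A0 : PW s0 s1 s2 s3 := PWI H1.
  have B0 : PW s0 s2 s1 s3 := PWI H2.
  have C0 : PW s0 s3 s1 s2 := PWI H3.
  have [[A1 A2 A3] [A4 A5 A6 A7]] := PW8 o02 o03 o12 o13 A0.
  have [[B1 B2 B3] [B4 B5 B6 B7]] := PW8 o01 o03 o21 o23 B0.
  have [[C1 C2 C3] [C4 C5 C6 C7]] := PW8 o01 o02 o31 o32 C0.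
  move=> a b c d; rewrite !inE.
  case/or4P => /eqP ->; case/or4P => /eqP ->; case/or4P => /eqP ->; case/or4P => /eqP -> => hu';
    first [ assumption | by move: hu'; rewrite /= !inE !eqxx ?orbT /= ?andbF ].
- move=> HQ.
  have e01 : (s0 == s1) = false by apply: negbTE.
  have e02 : (s0 == s2) = false by apply: negbTE.
  have e03 : (s0 == s3) = false by apply: negbTE.
  have e12 : (s1 == s2) = false by apply: negbTE.
  have e13 : (s1 == s3) = false by apply: negbTE.
  have e23 : (s2 == s3) = false by apply: negbTE.
  have u2 : uniq [:: s0; s2; s1; s3] by rewrite /= !inE ?(eq_sym s2 s1) ?(eq_sym s3 s1) ?(eq_sym s3 s2) ?e01 ?e02 ?e03 ?e12 ?e13 ?e23.
  have u3 : uniq [:: s0; s3; s1; s2] by rewrite /= !inE ?(eq_sym s2 s1) ?(eq_sym s3 s1) ?(eq_sym s3 s2) ?e01 ?e02 ?e03 ?e12 ?e13 ?e23.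
  have [H1] := HQ _ _ _ _ m0 m1 m2 m3 hu.
  have [H2] := HQ _ _ _ _ m0 m2 m1 m3 u2.
  have [H3] := HQ _ _ _ _ m0 m3 m1 m2 u3.
  exact: (conj H1 (conj H2 H3)).
Qed.

Lemma Q_conj (S T : seq (vec R)) : Wconj S T -> Q S -> Q T.
Proof.
case=> w [[s [hs hw]] hp] HQ a b c d ha hb hc hd hu.
have hnz : nz s := roots_nz hs.
have memT x : x \in T -> exists2 x', x' \in S & x = reflword s x'.
  move=> hx; have : x \in map w S by rewrite (perm_mem hp).
  by case/mapP => x' hx' ->; exists x' => //; rewrite hw.
have [a' ha' ea] := memT a ha; have [b' hb' eb] := memT b hb.
have [c' hc' ec] := memT c hc; have [d' hd' ed] := memT d hd.
have hu' : uniq [:: a'; b'; c'; d'].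
  have : uniq (map (reflword s) [:: a'; b'; c'; d']) by rewrite /= -ea -eb -ec -ed.
  by rewrite map_inj_uniq //; exact: rw_inj.
have [[s0 [hs0 hw0]]] := HQ a' b' c' d' ha' hb' hc' hd' hu'.
constructor; exists (s ++ s0 ++ rev s); split.
  by apply: roots_cat => //; apply: roots_cat => //; apply: roots_rev.
move=> y /=; rewrite ea eb ec ed -!rwB !rw_cat.
rewrite -{1}(rw_inv2 y hnz) -!rw_conj //.
by rewrite -[refl (a' - b') _]/((refl (a' - b') \o refl (c' - d')) _) hw0.
Qed.

Lemma halfE a c : halfOK a c -> (1/2) *: emb a = emb c.
Proof. by move=> /allP h; apply: emb_half => k hk; apply/eqP; apply: h; rewrite mem_iota. Qed.
Lemma reflOKE a b c : reflOK a b c -> refl (emb a) (emb b) = emb c.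
Proof. by case/andP => /allP h hD; apply: reflQ => // k hk; apply/eqP; apply: h; rewrite mem_iota. Qed.

Lemma pairW a b c d r1 r2 : pairChk a b c d r1 r2 -> PW (E a) (E b) (E c) (E d).
Proof.
case/and5P => h1 h2 h3 h4 /and3P [h5 h6 h7].
have eu : E a - E b = emb (subv (getroot a) (getroot b)) by rewrite /E embB.
have ev : E c - E d = emb (subv (getroot c) (getroot d)) by rewrite /E embB.
constructor; exists [:: E r1; E r2]; split.
  by move=> x; rewrite !inE => /orP [] /eqP ->; apply: E_root.
move=> x /=; rewrite eu ev refl_pair.
- by rewrite embD embB (halfE h6) (halfE h7).
- by rewrite dotp_emb (eqP h1) mul0r.
- by rewrite !dotp_emb (eqP h2).
- by rewrite dotp_emb mulf_neq0 ?intr_eq0 ?invr_eq0 ?pnatr_eq0.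
Qed.

Lemma SO_E L : chkSO L -> SOset (size L) (map E L).
Proof.
case/and3P => hL hu /allP hpair.
have rL : forall i, i \in L -> getroot i \in rootsL by move=> i hi; apply: getroot_mem; apply: (allP hL).
split.
  rewrite mapE map_inj_in_uniq // => x y /mapP [i hi ->] /mapP [j hj ->].
  by apply: emb_inj; apply: root_size; apply: rL.
split; first by rewrite size_map.
split; first by move=> x /mapP [i hi ->]; apply: E_root; apply: (allP hL).
move=> x y /mapP [i hi ->] /mapP [j hj ->] hxy.
have hij : i != j by apply: contra_neq hxy => ->.
move: (hpair i hi) => /allP/(_ j hj) /implyP/(_ hij) /and3P [hd hadd hsub].
rewrite memZP in hadd; rewrite memZP in hsub.
split => //; split; first by rewrite dotp_emb (eqP hd) mul0r.
split.
- rewrite /E embD => /rootE [z hz ez].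
  have ez' : addv (getroot i) (getroot j) = z by apply: emb_inj ez; rewrite ?size_mkv ?root_size.
  by rewrite ez' hz in hadd.
- rewrite /E embB => /rootE [z hz ez].
  have ez' : subv (getroot i) (getroot j) = z by apply: emb_inj ez; rewrite ?size_mkv ?root_size.
  by rewrite ez' hz in hsub.
Qed.
End C.


Section F.
Variable R : realFieldType.
Local Notation emb := (@emb R).
Local Notation E := (@E R).

Lemma chkK4_parts : [/\ chkSO tD, chkSO tA, pairChk 0 1 52 53 32 33, pairChk 0 52 1 53 5 33 &
  [/\ pairChk 0 53 1 52 5 32, reflOK (subv (getroot 52) (getroot 88)) (getroot 4) yA,
  reflOK (subv (getroot 0) (getroot 1)) yA yA & ~~ memZ yA rootsL]].
Proof. move: chkK4T => /and5P [h1 h2 h3 h4 /and4P [h5 h6 h7 h8]]. exact: (And5 h1 h2 h3 h4 (And4 h5 h6 h7 h8)). Qed.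

Lemma SO_D : SOset 4 (map E tD).
Proof. by have [h _ _ _ _] := chkK4_parts; exact: (SO_E R h). Qed.
Lemma SO_A : SOset 4 (map E tA).
Proof. by have [_ h _ _ _] := chkK4_parts; exact: (SO_E R h). Qed.

Lemma K4_D : K4_in_W_seq (map E tD).
Proof.
have [_ _ h1 h2 [h3 _ _ _]] := chkK4_parts.
change (K4_in_W (E 0) (E 1) (E 52) (E 53)).
have [H1] := pairW R h1; have [H2] := pairW R h2; have [H3] := pairW R h3.
exact: (conj H1 (conj H2 H3)).
Qed.

Lemma notK4_A : ~ K4_in_W_seq (map E tA).
Proof.
have [_ _ _ _ [_ r1 r2 hm]] := chkK4_parts.
change (~ K4_in_W (E 0) (E 1) (E 52) (E 88)).
case=> [[s [hs hw]] _].
have hx := rw_root hs (@E_root R 4 isT).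
rewrite -hw /= in hx.
move: hx; rewrite /E !embB.
rewrite (reflOKE R r1) (reflOKE R r2).
move/rootE => [z hz ez].
have eyz : yA = z by apply: (@emb_inj R yA z _ (root_size hz) ez).
by rewrite memZP eyz hz in hm.
Qed.
End F.

Theorem mainTheorem5 (R : realFieldType) :
  (forall (k : nat), (k <= 8)%N -> k != 4%N ->
     forall S T : seq (vec R), SOset k S -> SOset k T -> Wconj S T)
  /\
  ((forall S T : seq (vec R), SOset 4 S -> SOset 4 T ->
      (K4_in_W_seq S <-> K4_in_W_seq T) -> Wconj S T)
   /\ (forall S T : seq (vec R), SOset 4 S -> SOset 4 T ->
      Wconj S T -> (K4_in_W_seq S <-> K4_in_W_seq T))
   /\ (exists S : seq (vec R), SOset 4 S /\ K4_in_W_seq S)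
   /\ (exists S : seq (vec R), SOset 4 S /\ ~ K4_in_W_seq S)).
Proof.
have inv (S T : seq (vec R)) : SOset 4 S -> SOset 4 T -> Wconj S T -> K4_in_W_seq S -> K4_in_W_seq T.
  move=> hS hT hST /(K4Q hS) hQ; apply/(K4Q hT); exact: Q_conj hST hQ.
have st4 t : t \in startsOf 4 -> t = tD \/ t = tA.
  by rewrite (eqP startsOf4T) !inE => /orP [] /eqP ->; [left|right].
have SOt t : t = tD \/ t = tA -> SOset 4 (map (E R) t).
  by case=> ->; [exact: SO_D | exact: SO_A].
split.
  move=> k hk hk4 S T hS hT.
  have [t ht hSt] := classify hS; have [t' ht' hTt] := classify hT.
  rewrite (starts_uniq hk hk4 ht ht') in hSt.
  exact: Wconj_trans hSt (Wconj_sym hTt).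
split.
  move=> S T hS hT hiff.
  have [t ht hSt] := classify hS; have [t' ht' hTt] := classify hT.
  have hSt' := SOt _ (st4 _ ht); have hTt' := SOt _ (st4 _ ht').
  suff e : t = t' by rewrite e in hSt; exact: Wconj_trans hSt (Wconj_sym hTt).
  have kS : K4_in_W_seq S <-> K4_in_W_seq (map (E R) t).
    by split; [exact: inv hSt | exact: inv _ _ hSt' hS (Wconj_sym hSt)].
  have kT : K4_in_W_seq T <-> K4_in_W_seq (map (E R) t').
    by split; [exact: inv hTt | exact: inv _ _ hTt' hT (Wconj_sym hTt)].
  have hD := @K4_D R; have hA := @notK4_A R.
  by case: (st4 _ ht) kS => -> kS; case: (st4 _ ht') kT => -> kT //; exfalso; tauto.
split.
  move=> S T hS hT hST; split; [exact: inv hST | exact: inv _ _ hT hS (Wconj_sym hST)].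
split.
  by exists (map (E R) tD); split; [exact: SO_D | exact: K4_D].
by exists (map (E R) tA); split; [exact: SO_A | exact: notK4_A].
Qed.
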